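(* A graph $G$ is a cograph if and only if $G$ can be explained by a weak labeled level-1 network $(N,t)$.
   Context: Graphs are finite, simple, undirected; a cograph is a graph with no induced $P_4$. Network on finite $X$: a DAG $N=(V,E)$ with either $V=X=\{x\}$, or (N1) unique root $\rho_N$ of indegree 0, outdegree $\ge2$; (N2) $x\in X$ iff outdegree 0, indegree 1; (N3) every other non-root vertex has indegree 1 and outdegree $\ge2$, or indegree 2 (hybrid-vertex) and outdegree $\ge1$. Level-1: every biconnected component of the underlying undirected graph contains at most one hybrid-vertex; then $\mathrm{lca}_N(x,y)$ (the $\preceq$-minimal common ancestor) is unique. Labeled network $(N,t)$: $t:V\to\{0,1,\odot\}$ with $t(v)=\odot$ iff $v\in X$; it explains $G$ if $G$ is isomorphic to the graph on $X$ with $x\ne y$ adjacent iff $t(\mathrm{lca}_N(x,y))=1$. A cycle of a level-1 network is a biconnected component that is not a single vertex or edge; it is the union of two directed paths (sides) from its root $\rho_C$ to its hybrid-vertex $\eta_C$, internally vertex-disjoint. A cycle is weak if one side consists of $\rho_C,\eta_C$ only, or both sides contain exactly one vertex distinct from $\rho_C,\eta_C$. A network is weak if all its cycles are weak (trees are weak). *)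

(* Defs.v *)
From mathcomp Require Import all_boot.
Set Implicit Arguments. Unset Strict Implicit. Unset Printing Implicit Defensive.

Definition simple_graph (T : finType) (g : rel T) : Prop :=
  symmetric g /\ irreflexive g.

Definition has_induced_P4 (T : finType) (g : rel T) : Prop :=
  exists a b c d : T,
    uniq [:: a; b; c; d] /\
    g a b /\ g b c /\ g c d /\ ~~ g a c /\ ~~ g b d /\ ~~ g a d.

Definition cograph (T : finType) (g : rel T) : Prop := ~ has_induced_P4 g.

Section Net.
Variables (V : finType) (E : rel V).   (* E u v : arc u -> v *)

Definition indeg (v : V) : nat := #|[pred u | E u v]|.
Definition outdeg (v : V) : nat := #|[pred u | E v u]|.

Definition acyclic : Prop := forall u v, E u v -> ~~ connect E v u.

(* Network axioms: either a single vertex (which is the unique leaf), or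
   (N1) unique root of indegree 0 and outdegree >= 2,
   (N2) leaves: outdegree 0 and indegree 1,
   (N3) other vertices: tree vertices (in 1, out >= 2) or hybrids (in 2, out >= 1). *)
Definition is_network : Prop :=
  acyclic /\
  ((#|V| = 1 /\ forall u v, ~~ E u v) \/
   ((exists! r, indeg r = 0) /\
    (forall r, indeg r = 0 -> 2 <= outdeg r) /\
    (forall v, indeg v = 0 \/ (outdeg v = 0 /\ indeg v = 1)
               \/ (indeg v = 1 /\ 2 <= outdeg v)
               \/ (indeg v = 2 /\ 1 <= outdeg v)))).

Definition is_leaf (v : V) : bool := outdeg v == 0.
Definition is_hybrid (v : V) : bool := indeg v == 2.

Definition und (u v : V) : bool := E u v || E v u.
Definition und_in (S : {set V}) : rel V :=
  fun u v => [&& u \in S, v \in S & und u v].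

(* the subgraph induced by S is connected (empty counts as connected) *)
Definition conn_in (S : {set V}) : Prop :=
  forall u v, u \in S -> v \in S -> connect (und_in S) u v.

(* biconnected: connected and remains connected after deleting any vertex
   (so single vertices and single edges are biconnected) *)
Definition biconnected (S : {set V}) : Prop :=
  conn_in S /\ forall w, w \in S -> conn_in (S :\ w).

(* biconnected component (block): inclusion-maximal biconnected vertex set
   (blocks are induced subgraphs) *)
Definition is_block (S : {set V}) : Prop :=
  biconnected S /\ forall S' : {set V}, S \subset S' -> biconnected S' -> S' = S.

Definition level1 : Prop :=
  forall S : {set V}, is_block S -> #|[set v in S | is_hybrid v]| <= 1.

Definition is_cycle (S : {set V}) : Prop := is_block S /\ 3 <= #|S|.

(* C is the union of two internally vertex-disjoint directed paths (sides)
   r -> q1 -> h and r -> q2 -> h (q1, q2 the interior vertices), and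
   one side is just r,h or both sides have exactly one interior vertex. *)
Definition weak_cycle (S : {set V}) : Prop :=
  exists (r h : V) (q1 q2 : seq V),
    path E r (rcons q1 h) /\ path E r (rcons q2 h) /\
    uniq (r :: h :: q1 ++ q2) /\
    S = [set x | x \in r :: h :: q1 ++ q2] /\
    (q1 = [::] \/ q2 = [::] \/ (size q1 = 1 /\ size q2 = 1)).

Definition weak_network : Prop := forall S : {set V}, is_cycle S -> weak_cycle S.

(* lca: a ⪯-minimal common ancestor (u ancestor of v iff connect E u v) *)
Definition is_lca (x y w : V) : Prop :=
  connect E w x /\ connect E w y /\
  forall w', connect E w' x -> connect E w' y -> connect E w w' -> w' = w.

End Net.

Inductive label := L0 | L1 | Lodot.

(* (N,t) is a labeled level-1 weak network explaining g, N having n vertices;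
   f : T -> 'I_n is a bijection from the vertices of G onto the leaf set X. *)
Definition explained_by_weak_level1 (T : finType) (g : rel T) : Prop :=
  exists (n : nat) (E : rel 'I_n) (t : 'I_n -> label) (f : T -> 'I_n),
    is_network E /\ level1 E /\ weak_network E /\
    (forall v, t v = Lodot <-> is_leaf E v) /\
    injective f /\ (forall v, is_leaf E v -> exists a, f a = v) /\
    (forall a, is_leaf E (f a)) /\
    (forall a b, a != b ->
       (g a b <-> exists w, is_lca E (f a) (f b) w /\ t w = L1)).

(* Main.v *)
Require Import Defs.
From mathcomp Require Import all_boot zify.
From Stdlib Require Import Classical.
Set Implicit Arguments. Unset Strict Implicit. Unset Printing Implicit Defensive.

Section Basic.
Variables (V : finType) (E : rel V).
Hypothesis Hacyc : acyclic E.

Lemma acyc_irr u : ~~ E u u.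
Proof. apply/negP => H. by move: (Hacyc H); rewrite connect0. Qed.

Lemma first_step x y : connect E x y -> x != y -> exists2 c, E x c & connect E c y.
Proof.
move=> /connectP [[|c p] /= Hp ->]; first by rewrite eqxx.
case/andP: Hp => Hxc Hp _. exists c => //. apply/connectP; by exists p.
Qed.

Lemma last_step x y : connect E x y -> x != y -> exists2 c, connect E x c & E c y.
Proof.
move=> /connectP [p Hp ->]; elim/last_ind: p Hp => [|p c _]; first by rewrite /= eqxx.
rewrite rcons_path last_rcons => /andP [Hp Hc] _. exists (last x p) => //.
apply/connectP; by exists p.
Qed.

Lemma conn_antisym x y : connect E x y -> connect E y x -> x = y.
Proof.
move=> Hxy Hyx; apply/eqP/negPn/negP => Hne.
case: (first_step Hxy Hne) => c Hxc Hcy.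
by move: (Hacyc Hxc); rewrite (connect_trans Hcy Hyx).
Qed.

Lemma edge_neq x y : E x y -> x != y.
Proof. by move=> H; apply/eqP => Exy; move: H; rewrite Exy (negbTE (acyc_irr y)). Qed.

Lemma edge_nback x y : E x y -> ~~ connect E y x.
Proof. exact: Hacyc. Qed.

Lemma path_to_last x p t : path E x p -> t \in x :: p -> connect E t (last x p).
Proof.
elim: p x t => [|y p IH] x t /=; first by rewrite inE => _ /eqP ->.
case/andP => Hxy Hp; rewrite inE => /orP [/eqP ->|Ht].
- exact: connect_trans (connect1 Hxy) (IH y y Hp (mem_head _ _)).
- exact: IH.
Qed.

Lemma und_in_sym (S : {set V}) : symmetric (und_in E S).
Proof. by move=> x y; rewrite /und_in /und andbCA orbC. Qed.

Lemma und_conn_sym (S : {set V}) : connect_sym (und_in E S).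
Proof. apply: sym_connect_sym; exact: und_in_sym. Qed.

Lemma interval_conn (S : {set V}) x y :
  connect E x y -> (forall t, connect E x t -> connect E t y -> t \in S) ->
  connect (und_in E S) x y.
Proof.
move=> /connectP [p Hp Hy] HS.
have Hall : all (mem S) (x :: p).
  apply/allP => t Ht. apply: HS; first exact: (path_connect Hp Ht).
  rewrite Hy; exact: path_to_last.
apply/connectP; exists p => //.
apply: (sub_in_path (P := mem S)) Hall Hp => a b Ha Hb Hab.
by rewrite /und_in Ha Hb /und Hab.
Qed.

Lemma und_edge (S : {set V}) x y : x \in S -> y \in S -> E x y -> connect (und_in E S) x y.
Proof. move=> Hx Hy Hxy; apply: connect1; by rewrite /und_in Hx Hy /und Hxy. Qed.

Lemma conn_mono (S S' : {set V}) x y : S \subset S' ->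
  connect (und_in E S) x y -> connect (und_in E S') x y.
Proof.
move=> Hsub; apply: connect_sub => a b /and3P [Ha Hb Hab]; apply: connect1.
by rewrite /und_in (subsetP Hsub _ Ha) (subsetP Hsub _ Hb).
Qed.

Lemma conn_hub (A : {set V}) h : h \in A ->
  (forall y, y \in A -> connect (und_in E A) h y) -> conn_in E A.
Proof.
move=> Hh H x y Hx Hy. apply: connect_trans (H y Hy).
by rewrite und_conn_sym; apply: H.
Qed.

Lemma conn_union (A B : {set V}) c : conn_in E A -> conn_in E B -> c \in A -> c \in B ->
  conn_in E (A :|: B).
Proof.
move=> HA HB cA cB. apply: (conn_hub (h := c)); first by rewrite inE cA.
move=> y; rewrite inE => /orP [Hy|Hy].
- by apply: conn_mono (HA _ _ cA Hy); apply: subsetUl.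
- by apply: conn_mono (HB _ _ cB Hy); apply: subsetUr.
Qed.

Lemma setD1_notin (A : {set V}) w : w \notin A -> A :\ w = A.
Proof.
move=> Hw; apply/setP => x; rewrite !inE; case: eqP => // ->.
by rewrite (negbTE Hw).
Qed.

Lemma bicon_sub_del (A : {set V}) w : biconnected E A -> conn_in E (A :\ w).
Proof.
case=> HA HAw; case: (boolP (w \in A)) => Hw; first exact: HAw.
by rewrite setD1_notin.
Qed.

Lemma bicon_union (A B : {set V}) c d : biconnected E A -> biconnected E B ->
  c != d -> c \in A -> d \in A -> c \in B -> d \in B -> biconnected E (A :|: B).
Proof.
move=> HA HB cd cA dA cB dB; split.
  exact: (conn_union (proj1 HA) (proj1 HB) cA cB).
move=> w _; rewrite setDUl.
have [e [eA eB ew]] : exists e, [/\ e \in A, e \in B & e != w].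
  case: (eqVneq c w) => [Ecw|ncw]; last by exists c.
  exists d; split => //; by rewrite -Ecw eq_sym.
apply: (conn_union (c := e)); try exact: bicon_sub_del.
  by rewrite !inE ew.
by rewrite !inE ew.
Qed.

End Basic.

Section Extremal.
Variables (V : finType) (E : rel V).
Hypothesis Hacyc : acyclic E.

Lemma min_elem (Q : V -> Prop) w0 : Q w0 ->
  exists w, [/\ Q w, connect E w0 w & forall w', Q w' -> connect E w w' -> w' = w].
Proof.
move=> Hw0.
suff H : forall n w, #|[set y | connect E w y]| <= n -> Q w -> connect E w0 w ->
   exists w1, [/\ Q w1, connect E w0 w1 & forall w', Q w' -> connect E w1 w' -> w' = w1].
  exact: (H _ w0 (leqnn _) Hw0 (connect0 _ _)).
elim=> [|n IH] w Hn Qw Hw.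
  have : 0 < #|[set y | connect E w y]| by apply/card_gt0P; exists w; rewrite inE connect0.
  lia.
case: (classic (exists w', [/\ Q w', connect E w w' & w' != w])) => [[w' [Qw' Hww' Hne]]|Hno].
- apply: (IH w') => //; last exact: connect_trans Hw Hww'.
  have Hpr : [set y | connect E w' y] \proper [set y | connect E w y].
    apply/properP; split.
      apply/subsetP => y; rewrite !inE; exact: connect_trans.
    exists w; first by rewrite inE connect0.
    rewrite inE; apply/negP => Hw'w. by move: Hne; rewrite (conn_antisym Hacyc Hw'w Hww') eqxx.
  have := proper_card Hpr; lia.
- exists w; split => // w' Qw' Hww'. apply/eqP/negPn/negP => Hne; apply: Hno; by exists w'.
Qed.

Lemma max_elem (Q : V -> Prop) y0 : Q y0 ->
  exists z, [/\ Q z, connect E z y0 & forall y, Q y -> connect E y z -> y = z].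
Proof.
move=> Hy0.
suff H : forall n z, #|[set y | connect E y z]| <= n -> Q z -> connect E z y0 ->
   exists z1, [/\ Q z1, connect E z1 y0 & forall y, Q y -> connect E y z1 -> y = z1].
  exact: (H _ y0 (leqnn _) Hy0 (connect0 _ _)).
elim=> [|n IH] z Hn Qz Hz.
  have : 0 < #|[set y | connect E y z]| by apply/card_gt0P; exists z; rewrite inE connect0.
  lia.
case: (classic (exists y, [/\ Q y, connect E y z & y != z])) => [[y [Qy Hyz Hne]]|Hno].
- apply: (IH y) => //; last exact: connect_trans Hyz Hz.
  have Hpr : [set t | connect E t y] \proper [set t | connect E t z].
    apply/properP; split.
      apply/subsetP => t; rewrite !inE => H; exact: connect_trans H Hyz.
    exists z; first by rewrite inE connect0.
    rewrite inE; apply/negP => Hzy. by move: Hne; rewrite (conn_antisym Hacyc Hyz Hzy) eqxx.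
  have := proper_card Hpr; lia.
- exists z; split => // y Qy Hyz. apply/eqP/negPn/negP => Hne; apply: Hno; by exists y.
Qed.

End Extremal.

Section Blocks.
Variables (V : finType) (E : rel V).

Lemma block_sup S : biconnected E S -> exists B, is_block E B /\ S \subset B.
Proof.
suff H : forall n (S : {set V}), #|V| - #|S| <= n -> biconnected E S -> exists B, is_block E B /\ S \subset B.
  move=> HS; exact: (H _ S (leqnn _) HS).
elim=> [|n IH] S0 Hn HS.
- exists S0; split => //; split => // S' Hsub HS'.
  apply/eqP; rewrite eq_sym eqEcard Hsub /=.
  have h1 := max_card S'. lia.
- case: (classic (exists S' : {set V}, [/\ S0 \subset S', biconnected E S' & S' <> S0])) => [[S' [Hsub HS' Hne]]|Hno].
  + have Hpr : S0 \proper S'.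
      rewrite properEneq Hsub andbT. apply/eqP => Heq; exact: Hne (esym Heq).
    have := proper_card Hpr => Hc.
    have [B [HB HsB]] : exists B, is_block E B /\ S' \subset B.
      apply: IH => //. have h1 := max_card S'. lia.
    exists B; split => //; exact: subset_trans Hsub HsB.
  + exists S0; split => //; split => // S' Hsub HS'.
    apply: NNPP => Hne; apply: Hno; by exists S'.
Qed.

Lemma block_hyb B x y : level1 E -> is_block E B -> x \in B -> y \in B ->
  is_hybrid E x -> is_hybrid E y -> x = y.
Proof.
move=> Hl HB xB yB hx hy. have := Hl _ HB => /card_le1_eqP H.
by apply: H; rewrite inE ?xB ?yB ?hx ?hy.
Qed.

End Blocks.

Lemma P4_comb (T : finType) (g : rel T) (k : T -> nat) a b c d :
  symmetric g -> g a b -> g b c -> g c d -> ~~ g a c -> ~~ g b d -> ~~ g a d ->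
  (forall x y z, x \in [:: a; b; c; d] -> y \in [:: a; b; c; d] -> z \in [:: a; b; c; d] ->
     k y = k z -> k x != k y -> g x y = g x z) ->
  (k a = k b \/ k a = k c \/ k a = k d \/ k b = k c \/ k b = k d \/ k c = k d) ->
  k a = k b /\ k a = k c /\ k a = k d.
Proof.
move=> Hs Gab Gbc Gcd Nac Nbd Nad Hm Htwo.
have Pa : a \in [:: a; b; c; d] by rewrite !inE eqxx.
have Pb : b \in [:: a; b; c; d] by rewrite !inE eqxx !orbT.
have Pc : c \in [:: a; b; c; d] by rewrite !inE eqxx !orbT.
have Pd : d \in [:: a; b; c; d] by rewrite !inE eqxx !orbT.
have cl : forall x y z, x \in [:: a; b; c; d] -> y \in [:: a; b; c; d] -> z \in [:: a; b; c; d] ->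
   k y = k z -> g x y != g x z -> k x = k y.
  move=> x y z Hx Hy Hz Hyz Hg. apply/eqP/negPn/negP => Hn.
  by rewrite (Hm x y z Hx Hy Hz Hyz Hn) eqxx in Hg.
have gba : g b a by rewrite Hs.
have gcb : g c b by rewrite Hs.
have gdc : g d c by rewrite Hs.
have gca : g c a = false by rewrite Hs (negbTE Nac).
have gdb : g d b = false by rewrite Hs (negbTE Nbd).
have gda : g d a = false by rewrite Hs (negbTE Nad).
have AB : k a = k b -> k a = k b /\ k a = k c /\ k a = k d.
  move=> H. have Hc : k c = k a by apply: (cl c a b Pc Pa Pb H); rewrite gca gcb.
  have Hd : k d = k a by apply: (cl d a c Pd Pa Pc (esym Hc)); rewrite gda gdc.
  by split; [|split].
have AC : k a = k c -> k a = k b /\ k a = k c /\ k a = k d.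
  move=> H. have Hd : k d = k a by apply: (cl d a c Pd Pa Pc H); rewrite gda gdc.
  have Hb : k b = k a by apply: (cl b a d Pb Pa Pd (esym Hd)); rewrite gba (negbTE Nbd).
  by split; [|split].
have AD : k a = k d -> k a = k b /\ k a = k c /\ k a = k d.
  move=> H. have Hb : k b = k a by apply: (cl b a d Pb Pa Pd H); rewrite gba (negbTE Nbd).
  have Hc : k c = k a by apply: (cl c a d Pc Pa Pd H); rewrite gca Gcd.
  by split; [|split].
have BC : k b = k c -> k a = k b /\ k a = k c /\ k a = k d.
  move=> H. apply: AB. apply: (cl a b c Pa Pb Pc H); by rewrite Gab (negbTE Nac).
have BD : k b = k d -> k a = k b /\ k a = k c /\ k a = k d.
  move=> H. apply: AB. apply: (cl a b d Pa Pb Pd H); by rewrite Gab (negbTE Nad).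
have CD : k c = k d -> k a = k b /\ k a = k c /\ k a = k d.
  move=> H. apply: BC. apply: (cl b c d Pb Pc Pd H); by rewrite Gbc (negbTE Nbd).
by case: Htwo => [|[|[|[|[|]]]]].
Qed.

Lemma pigeon3 (ka kb kc kd : nat) : ka <= 2 -> kb <= 2 -> kc <= 2 -> kd <= 2 ->
  ka = kb \/ ka = kc \/ ka = kd \/ kb = kc \/ kb = kd \/ kc = kd.
Proof. lia. Qed.

Section ListAux.
Variable T : eqType.

Lemma last_notin (x : T) l : x \notin l -> last x l = x -> l = [::].
Proof.
case: l => //= a l Hx Hl. move: Hx; by rewrite -Hl mem_last.
Qed.

Lemma last_in (x : T) l : l != [::] -> last x l \in l.
Proof. case: l => //= a l _; exact: mem_last. Qed.

Lemma uniq_next (s A B l l' : seq T) v c c' : uniq s -> s = A ++ v :: c :: l ->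
  s = B ++ v :: c' :: l' -> c = c'.
Proof.
move=> Hu HA HB.
have iA : index v s = size A.
  move: Hu; rewrite {1}HA cat_uniq => /and3P [_ Hd _].
  rewrite HA index_cat. have -> : (v \in A) = false.
    apply/negP => H; move: Hd; by rewrite /= H.
  by rewrite /= eqxx addn0.
have iB : index v s = size B.
  move: Hu; rewrite {1}HB cat_uniq => /and3P [_ Hd _].
  rewrite HB index_cat. have -> : (v \in B) = false.
    apply/negP => H; move: Hd; by rewrite /= H.
  by rewrite /= eqxx addn0.
have D1 : drop (index v s) s = v :: c :: l by rewrite iA HA drop_size_cat.
have D2 : drop (index v s) s = v :: c' :: l' by rewrite iB HB drop_size_cat.
by move: D1; rewrite D2 => -[].
Qed.

Lemma same_chain (r : T) q l1 l2 m1 m2 c c' : uniq (r :: q) -> q = l1 ++ c :: l2 ->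
  q = m1 ++ c' :: m2 -> last r l1 = last r m1 -> c = c'.
Proof.
move=> Hu H1 H2 Hl.
apply: (uniq_next (s := r :: q) (A := belast r l1) (B := belast r m1) (v := last r l1) Hu).
- by rewrite {1}H1 -cat_cons lastI cat_rcons.
- by rewrite Hl {1}H2 -cat_cons lastI cat_rcons.
Qed.

Lemma uniq4 (r h0 : T) q1 q2 : uniq (r :: h0 :: q1 ++ q2) ->
  [/\ r \notin q1, r \notin q2, uniq (r :: q1), uniq (r :: q2)
    & forall x, x \in q1 -> x \notin q2].
Proof.
move=> /andP [Hr /andP [Hh Hq]].
have Hr1 : r \notin q1 by apply/negP => H; move: Hr; rewrite inE mem_cat H !orbT.
have Hr2 : r \notin q2 by apply/negP => H; move: Hr; rewrite inE mem_cat H !orbT.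
have Hq' : uniq (q1 ++ q2) := Hq. move: Hq'; rewrite cat_uniq => /and3P [U1 Hd U2].
split => //; rewrite ?cons_uniq ?Hr1 ?Hr2 //.
move=> x Hx; apply/negP => Hx2; move/negP: Hd; apply; apply/hasP; by exists x.
Qed.

Lemma uniq4C (r h0 : T) q1 q2 : uniq (r :: h0 :: q1 ++ q2) -> uniq (r :: h0 :: q2 ++ q1).
Proof.
rewrite !cons_uniq !inE !mem_cat => /andP [H1 /andP [H2 H3]].
by rewrite (orbC (r \in q2)) (orbC (h0 \in q2)) H1 H2 /= uniq_catC.
Qed.

End ListAux.

Section Cycles.
Variables (V : finType) (E : rel V).
Hypothesis Hacyc : acyclic E.
Hypothesis Hdeg : forall v, indeg E v <= 2.
Hypothesis Hlev : level1 E.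

Definition top (c1 c2 z : V) :=
  [/\ connect E c1 z, connect E c2 z &
      forall y, connect E c1 y -> connect E c2 y -> connect E y z -> y = z].

Definition cyc (u c1 c2 z : V) : {set V} :=
  [set y | (y == u) || ((connect E c1 y || connect E c2 y) && connect E y z)].

Definition cfg (u c1 c2 z : V) := [/\ E u c1, E u c2, c1 != c2 & top c1 c2 z].

Lemma top_sym c1 c2 z : top c1 c2 z -> top c2 c1 z.
Proof. case=> H1 H2 H; split => // y Hy1 Hy2; exact: H. Qed.

Lemma cfg_sym u c1 c2 z : cfg u c1 c2 z -> cfg u c2 c1 z.
Proof. case=> H1 H2 H3 H4; split => //; [by rewrite eq_sym | exact: top_sym]. Qed.

Lemma cyc_u u c1 c2 z : u \in cyc u c1 c2 z.
Proof. by rewrite inE eqxx. Qed.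

Lemma cyc_in u c1 c2 z y : connect E c1 y -> connect E y z -> y \in cyc u c1 c2 z.
Proof. by move=> H1 H2; rewrite inE H1 H2 orbT. Qed.

Lemma cyc_in2 u c1 c2 z y : connect E c2 y -> connect E y z -> y \in cyc u c1 c2 z.
Proof. by move=> H1 H2; rewrite inE H1 H2 !orbT. Qed.

Lemma conn_u (S : {set V}) u c y : E u c -> u \in S -> connect E c y ->
  (forall t, connect E c t -> connect E t y -> t \in S) -> connect (und_in E S) u y.
Proof.
move=> Huc uS Hcy HS. apply: connect_trans (interval_conn Hcy HS).
apply: und_edge => //. apply: HS => //; exact: connect0.
Qed.

Lemma cyc_bicon u c1 c2 z : E u c1 -> E u c2 -> top c1 c2 z -> biconnected E (cyc u c1 c2 z).
Proof.
move=> E1 E2 [T1 T2 Tz].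
set S := cyc u c1 c2 z.
have nuc : forall c t, (c = c1 \/ c = c2) -> connect E c t -> t != u.
  move=> c t [->|->] Ht; apply/eqP => Htu.
    by move: (edge_nback Hacyc E1); rewrite -Htu Ht.
  by move: (edge_nback Hacyc E2); rewrite -Htu Ht.
have inS : forall c t, (c = c1 \/ c = c2) -> connect E c t -> connect E t z -> t \in S.
  move=> c t [->|->] H1 H2; [exact: cyc_in | exact: cyc_in2].
have side : forall y, y \in S -> y != u ->
   exists c, [/\ E u c, connect E c y, connect E y z & (c = c1 \/ c = c2)].
  move=> y; rewrite inE => /orP [/eqP ->|]; first by rewrite eqxx.
  case/andP => /orP [H|H] Hz _; [exists c1 | exists c2]; split => //; by [left|right].
have uS : u \in S by exact: cyc_u.
split.
- apply: (conn_hub (h := u)) => // y yS.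
  case: (eqVneq y u) => [->|yu]; first exact: connect0.
  have [c [Hc Hcy Hyz Hside]] := side y yS yu.
  apply: (conn_u Hc uS Hcy) => t Hct Hty. apply: (inS c) => //; exact: connect_trans Hty Hyz.
- move=> w wS.
  case: (eqVneq w u) => [->|wu].
  + have zS : z \in S :\ u.
      rewrite in_setD1 (nuc c1) //; [|by left]. by rewrite (cyc_in _ _ T1 (connect0 _ _)).
    apply: (conn_hub (h := z)) => // y; rewrite in_setD1 => /andP [yu yS].
    have [c [Hc Hcy Hyz Hside]] := side y yS yu.
    rewrite und_conn_sym. apply: interval_conn => // t Hyt Htz.
    have Hct := connect_trans Hcy Hyt.
    by rewrite in_setD1 (nuc c) // (inS c).
  + have uS' : u \in S :\ w by rewrite in_setD1 eq_sym wu.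
    apply: (conn_hub (h := u)) => // y; rewrite in_setD1 => /andP [yw yS].
    case: (eqVneq y u) => [->|yu]; first exact: connect0.
    have [c [Hc Hcy Hyz Hside]] := side y yS yu.
    case: (boolP (connect E w y)) => Hwy.
    * have Hyz' : connect (und_in E (S :\ w)) y z.
        apply: interval_conn => // t Hyt Htz. rewrite in_setD1 (inS c) //; last exact: connect_trans Hcy Hyt.
        rewrite andbT; apply/eqP => Htw. rewrite Htw in Hyt.
        by rewrite (conn_antisym Hacyc Hyt Hwy) eqxx in yw.
      have wz : w != z.
        apply/eqP => Hwz. have := conn_antisym Hacyc Hyz; rewrite -Hwz => /(_ Hwy) Hyw.
        by rewrite Hyw eqxx in yw.
      have [cw [Hcw Hcww Hwzz Hsw]] := side w wS wu.
      have [c' [Hc' Hside' Hnc']] : exists c', [/\ E u c', c' = c1 \/ c' = c2 & ~~ connect E c' w].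
        case: (boolP (connect E c1 w)) => H1.
          exists c2; split => //; first by right.
          apply/negP => H2; move: wz; by rewrite (Tz w) ?eqxx.
        exists c1; split => //; by left.
      have Huz : connect (und_in E (S :\ w)) u z.
        apply: (conn_u Hc' uS') => //; first by case: Hside' => ->.
        move=> t Hct Htz. rewrite in_setD1 (inS c') // andbT.
        apply/eqP => Htw; move: Hnc'; by rewrite -Htw Hct.
      apply: connect_trans Huz _. by rewrite und_conn_sym.
    * apply: (conn_u Hc uS') => // t Hct Hty.
      rewrite in_setD1 (inS c) //; last exact: connect_trans Hty Hyz.
      rewrite andbT; apply/eqP => Htw; move: Hwy; by rewrite -Htw Hty.
Qed.

Lemma indeg_ge (z : V) (s : seq V) : uniq s -> all (fun y => E y z) s -> size s <= indeg E z.
Proof.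
move=> Hu Ha. rewrite /indeg -(card_uniqP Hu). apply: subset_leq_card.
apply/subsetP => y Hy; rewrite inE. exact: (allP Ha).
Qed.

Lemma hyb2 x y z : E x z -> E y z -> x != y -> is_hybrid E z.
Proof.
move=> Hx Hy Hxy. rewrite /is_hybrid eqn_leq Hdeg /=.
have := @indeg_ge z [:: x; y]; rewrite /= !inE. apply; [by rewrite andbT | by rewrite Hx Hy].
Qed.

Lemma no3 x y w z : E x z -> E y z -> E w z -> x != y -> x != w -> y != w -> False.
Proof.
move=> Hx Hy Hw Hxy Hxw Hyw.
have := @indeg_ge z [:: x; y; w]; rewrite /= !inE !negb_or Hxy Hxw Hyw Hx Hy Hw /= => /(_ isT isT).
have := Hdeg z. lia.
Qed.

Lemma in_nb u c z : E u c -> connect E c z ->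
  exists y, E y z /\ ((c = z /\ y = u) \/ (c != z /\ connect E c y)).
Proof.
move=> Huc Hcz. case: (eqVneq c z) => [<-|Hne].
  exists u; split => //; by left.
have [y Hcy Hyz] := last_step Hcz Hne. exists y; split => //; by right.
Qed.

Lemma in_nb_dist u c1 c2 z y1 y2 : E u c1 -> E u c2 -> c1 != c2 -> top c1 c2 z ->
  E y1 z -> ((c1 = z /\ y1 = u) \/ (c1 != z /\ connect E c1 y1)) ->
  E y2 z -> ((c2 = z /\ y2 = u) \/ (c2 != z /\ connect E c2 y2)) -> y1 != y2.
Proof.
move=> E1 E2 Hne [T1 T2 Tz] Hy1 S1 Hy2 S2. apply/eqP => Hyy. subst y2.
case: S1 => [[Hc1 Hu1]|[Hc1 Hcy1]]; case: S2 => [[Hc2 Hu2]|[Hc2 Hcy2]].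
- by move: Hne; rewrite Hc1 Hc2 eqxx.
- subst y1. by move: (edge_nback Hacyc E2); rewrite Hcy2.
- subst y1. by move: (edge_nback Hacyc E1); rewrite Hcy1.
- have := Tz y1 Hcy1 Hcy2 (connect1 Hy1) => Hy1z. subst y1.
  by move: (acyc_irr Hacyc z); rewrite Hy1.
Qed.

Lemma cfg_hyb u c1 c2 z : cfg u c1 c2 z -> is_hybrid E z.
Proof.
case=> E1 E2 Hne [T1 T2 Tz].
have [y1 [Hy1 S1]] := in_nb E1 T1. have [y2 [Hy2 S2]] := in_nb E2 T2.
apply: (hyb2 Hy1 Hy2). exact: (in_nb_dist E1 E2 Hne (And3 T1 T2 Tz) Hy1 S1 Hy2 S2).
Qed.

Lemma same_hyb (S1 S2 : {set V}) a b z1 z2 : biconnected E S1 -> biconnected E S2 ->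
  a != b -> a \in S1 -> b \in S1 -> a \in S2 -> b \in S2 ->
  z1 \in S1 -> z2 \in S2 -> is_hybrid E z1 -> is_hybrid E z2 -> z1 = z2.
Proof.
move=> B1 B2 ab a1 b1 a2 b2 z1S z2S h1 h2.
have [B [HB Hsub]] := block_sup (bicon_union B1 B2 ab a1 b1 a2 b2).
apply: (block_hyb Hlev HB) => //; apply: (subsetP Hsub); by rewrite inE ?z1S ?z2S ?orbT.
Qed.

Lemma cyc_z u c1 c2 z : top c1 c2 z -> z \in cyc u c1 c2 z.
Proof. case=> T1 _ _; exact: cyc_in T1 (connect0 _ _). Qed.

Lemma cfg_same u c1 c2 z u' c1' c2' z' a b : cfg u c1 c2 z -> cfg u' c1' c2' z' ->
  a != b -> a \in cyc u c1 c2 z -> b \in cyc u c1 c2 z ->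
  a \in cyc u' c1' c2' z' -> b \in cyc u' c1' c2' z' -> z = z'.
Proof.
move=> C C' ab a1 b1 a2 b2.
have B := cyc_bicon (let: And4 x _ _ _ := C in x) (let: And4 _ x _ _ := C in x) (let: And4 _ _ _ x := C in x).
have B' := cyc_bicon (let: And4 x _ _ _ := C' in x) (let: And4 _ x _ _ := C' in x) (let: And4 _ _ _ x := C' in x).
apply: (same_hyb B B' ab a1 b1 a2 b2); try exact: cfg_hyb C; try exact: cfg_hyb C'.
- case: C => _ _ _ T; exact: cyc_z.
- case: C' => _ _ _ T; exact: cyc_z.
Qed.

Lemma top_ex c1 c2 y : connect E c1 y -> connect E c2 y -> exists z, top c1 c2 z /\ connect E z y.
Proof.
move=> H1 H2.
have [z [[Z1 Z2] Hzy Hmax]] := max_elem Hacyc (Q := fun t => connect E c1 t /\ connect E c2 t) (conj H1 H2).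
exists z; split => //; split => // t Ht1 Ht2 Htz; exact: Hmax.
Qed.

Lemma top_below u c1 c2 h y : cfg u c1 c2 h -> connect E c1 y -> connect E c2 y -> connect E h y.
Proof.
move=> C H1 H2. have [z [Tz Hzy]] := top_ex H1 H2.
have C' : cfg u c1 c2 z by case: C => ????; split.
have ->: h = z; last by [].
case: C => E1 E2 Hne [T1 T2 Th].
apply: (cfg_same (And4 E1 E2 Hne (And3 T1 T2 Th)) C' (a := u) (b := c1)).
- exact: (edge_neq Hacyc E1).
- exact: cyc_u.
- exact: cyc_in (connect0 _ _) T1.
- exact: cyc_u.
- case: Tz => Z1 _ _; exact: cyc_in (connect0 _ _) Z1.
Qed.


Hypothesis Hroot : exists rho, forall v, connect E rho v.

Lemma lcaA p q w0 : connect E w0 p -> connect E w0 q ->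
  (forall c, E w0 c -> connect E c p -> connect E c q -> False) ->
  forall w, is_lca E p q w -> w = w0.
Proof.
move=> H0p H0q Hno w [Hwp [Hwq Hmin]].
apply: NNPP => Hne.
have nw0w : ~~ connect E w0 w.
  apply/negP => H. have Hne' : w0 != w by apply/eqP => E0; apply: Hne; rewrite E0.
  have [c Hc Hcw] := first_step H Hne'.
  exact: (Hno c Hc (connect_trans Hcw Hwp) (connect_trans Hcw Hwq)).
have nww0 : ~~ connect E w w0.
  apply/negP => H; apply: Hne; symmetry; exact: Hmin.
have [rho Hrho] := Hroot.
have [u [[Uw0 Uw] _ Umin]] := min_elem Hacyc (Q := fun t => connect E t w0 /\ connect E t w) (w0 := rho) (conj (Hrho w0) (Hrho w)).
have uw0 : u != w0 by apply/eqP => E0; move: nw0w; rewrite -E0 Uw.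
have uw : u != w by apply/eqP => E0; move: nww0; rewrite -E0 Uw0.
have [c1 E1 C1] := first_step Uw0 uw0.
have [c2 E2 C2] := first_step Uw uw.
have nc1w : ~~ connect E c1 w.
  apply/negP => H. have Hc1 := Umin c1 (conj C1 H) (connect1 E1).
  by rewrite Hc1 (negbTE (acyc_irr Hacyc u)) in E1.
have nc2w0 : ~~ connect E c2 w0.
  apply/negP => H. have Hc2 := Umin c2 (conj H C2) (connect1 E2).
  by rewrite Hc2 (negbTE (acyc_irr Hacyc u)) in E2.
have c12 : c1 != c2 by apply/eqP => Ec; move: nc1w; rewrite Ec C2.
have C1p : connect E c1 p := connect_trans C1 H0p.
have C2p : connect E c2 p := connect_trans C2 Hwp.
have [h [Th Hhp]] := top_ex C1p C2p.
have Cf : cfg u c1 c2 h by split.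
have [Th1 Th2 _] := Th.
case: (boolP (connect E w0 h)) => Hw0h.
- have w0h : w0 != h by apply/eqP => Ew; move: nc2w0; rewrite Ew Th2.
  have [s Hs Hsh] := first_step Hw0h w0h.
  have Hhq : connect E h q := top_below Cf (connect_trans C1 H0q) (connect_trans C2 Hwq).
  exact: (Hno s Hs (connect_trans Hsh Hhp) (connect_trans Hsh Hhq)).
- have nhw0 : ~~ connect E h w0 by apply/negP => H; move: nc2w0; rewrite (connect_trans Th2 H).
  have [u' [[U'w0 U'h] Hc1u' U'min]] := min_elem Hacyc (Q := fun t => connect E t w0 /\ connect E t h) (w0 := c1) (conj C1 Th1).
  have u'w0 : u' != w0 by apply/eqP => E0; move: Hw0h; rewrite -E0 U'h.
  have u'h : u' != h by apply/eqP => E0; move: nhw0; rewrite -E0 U'w0.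
  have [e1 F1 G1] := first_step U'w0 u'w0.
  have [e2 F2 G2] := first_step U'h u'h.
  have ne1h : ~~ connect E e1 h.
    apply/negP => H. have He1 := U'min e1 (conj G1 H) (connect1 F1).
    by rewrite He1 (negbTE (acyc_irr Hacyc u')) in F1.
  have e12 : e1 != e2 by apply/eqP => Ee; move: ne1h; rewrite Ee G2.
  have [h2 [T2 _]] := top_ex (connect_trans G1 H0p) (connect_trans G2 Hhp).
  have Cf2 : cfg u' e1 e2 h2 by split.
  have [_ T22 _] := T2.
  have Eh : h2 = h.
    apply: (cfg_same Cf2 Cf (a := u') (b := e2)).
    - exact: (edge_neq Hacyc F2).
    - exact: cyc_u.
    - exact: cyc_in2 (connect0 _ _) T22.
    - exact: cyc_in Hc1u' U'h.
    - exact: cyc_in (connect_trans Hc1u' (connect1 F2)) G2.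
  by move: ne1h; case: T2 => T21 _ _; rewrite -Eh T21.
Qed.

Lemma lca_of p q w0 : connect E w0 p -> connect E w0 q ->
  (forall c, E w0 c -> connect E c p -> connect E c q -> False) -> is_lca E p q w0.
Proof.
move=> H0p H0q Hno; split => //; split => // w' Hp Hq H0.
apply/eqP/negPn/negP => Hne. rewrite eq_sym in Hne.
have [c Hc Hcw] := first_step H0 Hne.
exact: (Hno c Hc (connect_trans Hcw Hp) (connect_trans Hcw Hq)).
Qed.

Lemma L3 v c1 c2 c3 : E v c1 -> E v c2 -> E v c3 -> c1 != c2 -> c1 != c3 -> c2 != c3 ->
  (exists y, connect E c1 y /\ connect E c2 y) -> (exists y, connect E c1 y /\ connect E c3 y) -> False.
Proof.
move=> E1 E2 E3 n12 n13 n23 [y [Y1 Y2]] [y' [Y1' Y3']].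
have [h [Th _]] := top_ex Y1 Y2.
have [h' [Th' _]] := top_ex Y1' Y3'.
have C12 : cfg v c1 c2 h by split.
have C13 : cfg v c1 c3 h' by split.
have [T1 T2 Tz] := Th. have [T1' T3' Tz'] := Th'.
have v1 : v != c1 := edge_neq Hacyc E1.
have v2 : v != c2 := edge_neq Hacyc E2.
have Eh : h' = h.
  apply: (cfg_same C13 C12 v1); try exact: cyc_u; exact: cyc_in (connect0 _ _) _.
subst h'.
have [h'' [Th'' Hh'']] := top_ex T2 T3'.
have C23 : cfg v c2 c3 h'' by split.
have Eh' : h'' = h.
  apply: (cfg_same C23 C12 v2); try exact: cyc_u.
  - case: Th'' => Z _ _; exact: cyc_in (connect0 _ _) Z.
  - exact: cyc_in2 (connect0 _ _) T2.
subst h''.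
have [y1 [Hy1 S1]] := in_nb E1 T1.
have [y2 [Hy2 S2]] := in_nb E2 T2.
have [y3 [Hy3 S3]] := in_nb E3 T3'.
apply: (no3 Hy1 Hy2 Hy3).
- exact: (in_nb_dist E1 E2 n12 Th Hy1 S1 Hy2 S2).
- exact: (in_nb_dist E1 E3 n13 Th' Hy1 S1 Hy3 S3).
- exact: (in_nb_dist E2 E3 n23 Th'' Hy2 S2 Hy3 S3).
Qed.

Hypothesis Hweak : weak_network E.

Lemma chain_pred r q h0 c v : path E r (rcons q h0) -> c \in q -> (forall y, E y c -> y = v) ->
  exists l1 l2, q = l1 ++ c :: l2 /\ last r l1 = v.
Proof.
move=> Hp Hc Hy; move: Hp; case/splitPr: Hc => l1 l2 Hp. exists l1, l2; split => //.
apply: Hy. move: Hp; rewrite rcons_cat cat_path /= => /and3P [_ H _]; exact: H.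
Qed.

Lemma two_chains r h0 q1 q2 l1 l2 m1 m2 c c' v :
  uniq (r :: h0 :: q1 ++ q2) -> path E r (rcons q1 h0) -> path E r (rcons q2 h0) ->
  (q1 = [::] \/ q2 = [::] \/ (size q1 = 1 /\ size q2 = 1)) ->
  q1 = l1 ++ c :: l2 -> last r l1 = v -> q2 = m1 ++ c' :: m2 -> last r m1 = v ->
  E c h0 /\ E c' h0.
Proof.
move=> U P1 P2 Sh Q1 L1 Q2 L2.
have [Hr1 Hr2 q1u q2u Hdis] := uniq4 U.
have vr : v = r.
  apply/eqP/negPn/negP => Hne.
  have : v \in r :: l1 by rewrite -L1 mem_last.
  rewrite inE (negbTE Hne) /= => Hv1.
  have : v \in r :: m1 by rewrite -L2 mem_last.
  rewrite inE (negbTE Hne) /= => Hv2.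
  have : v \in q1 by rewrite Q1 mem_cat Hv1.
  move/Hdis; by rewrite Q2 mem_cat Hv2.
rewrite vr in L1 L2.
have El1 : l1 = [::].
  apply: (last_notin (x := r)) => //. apply/negP => H; move: Hr1; by rewrite Q1 mem_cat H.
have Em1 : m1 = [::].
  apply: (last_notin (x := r)) => //. apply/negP => H; move: Hr2; by rewrite Q2 mem_cat H.
rewrite El1 Em1 /= in Q1 Q2. subst q1 q2.
case: Sh => [//|[//|[S1 S2]]].
have El2 : l2 = [::] by apply/eqP; rewrite -size_eq0; move: S1 => /= [] ->.
have Em2 : m2 = [::] by apply/eqP; rewrite -size_eq0; move: S2 => /= [] ->.
rewrite El2 in P1; rewrite Em2 in P2.
move: P1 P2; rewrite /= => /and3P [_ H1 _] /and3P [_ H2 _]; by split.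
Qed.

Lemma weak_shape v c1 c2 h : cfg v c1 c2 h -> c1 = h \/ c2 = h \/ (E c1 h /\ E c2 h).
Proof.
move=> Cf. have [E1 E2 n12 Th] := Cf. have [T1 T2 Tz] := Th.
case: (eqVneq c1 h) => [->|c1h]; first by left.
case: (eqVneq c2 h) => [->|c2h]; first by right; left.
right; right.
have Bc := cyc_bicon E1 E2 Th.
have [B [HB Hsub]] := block_sup Bc.
have inB : forall y, y \in cyc v c1 c2 h -> y \in B := fun y Hy => subsetP Hsub y Hy.
have vB : v \in B := inB _ (cyc_u _ _ _ _).
have c1B : c1 \in B := inB _ (@cyc_in v c1 c2 h c1 (connect0 _ _) T1).
have c2B : c2 \in B := inB _ (@cyc_in2 v c1 c2 h c2 (connect0 _ _) T2).
have hB : h \in B := inB _ (@cyc_z v c1 c2 h Th).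
have v1 := edge_neq Hacyc E1. have v2 := edge_neq Hacyc E2.
have card3 : 3 <= #|B|.
  have Hu : uniq [:: v; c1; c2] by rewrite /= !inE !negb_or v1 v2 n12.
  rewrite -[3]/(size [:: v; c1; c2]) -(card_uniqP Hu). apply: subset_leq_card.
  apply/subsetP => y; rewrite !inE => /or3P [] /eqP ->; done.
have [r [h0 [q1 [q2 [P1 [P2 [U [HBe Hshape]]]]]]]] := Hweak (conj HB card3).
have memB : forall x, (x \in B) = (x \in r :: h0 :: q1 ++ q2) by move=> x; rewrite HBe inE.
have rreach : forall x, x \in B -> connect E r x.
  move=> x; rewrite memB inE => /orP [/eqP ->|]; first exact: connect0.
  rewrite inE mem_cat => /or3P [/eqP ->|Hx|Hx].
  - apply: (path_connect P1). by rewrite inE mem_rcons inE eqxx orbT.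
  - apply: (path_connect P1). by rewrite inE mem_rcons inE Hx !orbT.
  - apply: (path_connect P2). by rewrite inE mem_rcons inE Hx !orbT.
have [Hr1 Hr2 q1u q2u Hdis] := uniq4 U.
have h0B : h0 \in B by rewrite memB !inE eqxx orbT.
have h0hyb : is_hybrid E h0.
  apply: (hyb2 (x := last r q1) (y := last r q2)).
  - by move: P1; rewrite rcons_path => /andP [].
  - by move: P2; rewrite rcons_path => /andP [].
  - apply/eqP => Hl.
    case: (eqVneq q1 [::]) => [Eq1|Nq1].
      case: (eqVneq q2 [::]) => [Eq2|Nq2].
        move: card3; rewrite HBe Eq1 Eq2 /=.
        have := card_size [:: r; h0]. rewrite cardsE => H1 H2. have := leq_trans H2 H1. by [].
      move: Hl; rewrite Eq1 /= => Hl. move: (last_in r Nq2); by rewrite -Hl (negbTE Hr2).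
    have Hq1 := last_in r Nq1. rewrite Hl in Hq1.
    have : last r q2 \in r :: q2 by exact: mem_last.
    rewrite inE => /orP [/eqP Er|Hq2].
      by move: Hq1; rewrite Er (negbTE Hr1).
    by move: (Hdis _ Hq1); rewrite Hq2.
have Eh0 : h0 = h := block_hyb Hlev HB h0B hB h0hyb (cfg_hyb Cf).
subst h0.
have inq : forall c, E v c -> c \in B -> c != h -> c \in q1 ++ q2.
  move=> c Hvc cB ch. move: cB; rewrite memB !inE (negbTE ch) /= => /orP [/eqP Ecr|//].
  move: (edge_nback Hacyc Hvc); by rewrite Ecr (rreach v vB).
have uniqin : forall c, E v c -> c \in B -> c != h -> forall y, E y c -> y = v.
  move=> c Hvc cB ch y Hy.
  have nh : ~~ is_hybrid E c.
    apply/negP => Hc; move: ch; by rewrite (block_hyb Hlev HB cB hB Hc (cfg_hyb Cf)) eqxx.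
  have H1 : 1 <= indeg E c.
    have := @indeg_ge c [:: v]; rewrite /= Hvc /=; by apply.
  have Hle : indeg E c <= 1.
    rewrite leqNgt; apply/negP => H2; move/negP: nh; apply. by rewrite /is_hybrid eqn_leq Hdeg H2.
  move/card_le1_eqP: Hle => H. apply: H; by rewrite inE.
have Hshape' : q2 = [::] \/ q1 = [::] \/ (size q2 = 1 /\ size q1 = 1).
  case: Hshape => [H|[H|[H1 H2]]]; [by right; left | by left | by right; right].
have U' : uniq (r :: h :: q2 ++ q1) := uniq4C U.
move: (inq _ E1 c1B c1h) (inq _ E2 c2B c2h); rewrite !mem_cat.
move=> /orP [C1|C1] /orP [C2|C2].
- have [l1 [l2 [Q1 L1]]] := chain_pred P1 C1 (uniqin _ E1 c1B c1h).
  have [m1 [m2 [Q2 L2]]] := chain_pred P1 C2 (uniqin _ E2 c2B c2h).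
  move: n12; by rewrite (same_chain q1u Q1 Q2) ?eqxx // L1 L2.
- have [l1 [l2 [Q1 L1]]] := chain_pred P1 C1 (uniqin _ E1 c1B c1h).
  have [m1 [m2 [Q2 L2]]] := chain_pred P2 C2 (uniqin _ E2 c2B c2h).
  exact: (two_chains U P1 P2 Hshape Q1 L1 Q2 L2).
- have [l1 [l2 [Q1 L1]]] := chain_pred P2 C1 (uniqin _ E1 c1B c1h).
  have [m1 [m2 [Q2 L2]]] := chain_pred P1 C2 (uniqin _ E2 c2B c2h).
  exact: (two_chains U' P2 P1 Hshape' Q1 L1 Q2 L2).
- have [l1 [l2 [Q1 L1]]] := chain_pred P2 C1 (uniqin _ E1 c1B c1h).
  have [m1 [m2 [Q2 L2]]] := chain_pred P2 C2 (uniqin _ E2 c2B c2h).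
  move: n12; by rewrite (same_chain q2u Q1 Q2) ?eqxx // L1 L2.
Qed.

Lemma leaf_reach v y : is_leaf E v -> connect E v y -> y = v.
Proof.
move=> Hl Hvy. apply/eqP/negPn/negP => Hne. rewrite eq_sym in Hne.
have [c Hc _] := first_step Hvy Hne.
move: Hl; rewrite /is_leaf /outdeg => /eqP /card0_eq /(_ c). by rewrite !inE Hc.
Qed.

Lemma pair02 v c1 c2 h p q : cfg v c1 c2 h -> E c1 h -> E c2 h ->
  connect E c1 p -> ~~ connect E c2 p -> connect E c1 q -> connect E c2 q ->
  forall e, E c1 e -> connect E e p -> connect E e q -> False.
Proof.
move=> Cf E1h E2h C1p N2p C1q C2q e Ee Ep Eq.
have [E1 E2 n12 Th] := Cf. have [T1 T2 Tz] := Th.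
case: (eqVneq e h) => [Eeh|neh].
  by move: N2p; rewrite (connect_trans (connect1 E2h)) // -Eeh.
have Hhq : connect E h q := top_below Cf C1q C2q.
have [h' [Th' _]] := top_ex Eq Hhq.
have Cf' : cfg c1 e h h' by split.
have [Te Th2 _] := Th'.
have Eh : h' = h.
  apply: (cfg_same Cf' Cf (a := c1) (b := h)).
  - exact: (edge_neq Hacyc E1h).
  - exact: cyc_u.
  - exact: cyc_in2 (connect0 _ _) Th2.
  - exact: cyc_in (connect0 _ _) T1.
  - exact: cyc_z.
rewrite Eh in Te.
have [y Hey Hyh] := last_step Te neh.
apply: (no3 E1h E2h Hyh) => //.
- apply/eqP => Ey; move: (edge_nback Hacyc Ee); by rewrite Ey Hey.
- apply/eqP => Ey. have H12 : connect E c1 c2 by rewrite Ey (connect_trans (connect1 Ee) Hey).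
  have := Tz c2 H12 (connect0 _ _) (connect1 E2h) => Ec2. rewrite Ec2 in E2h.
  by move: (acyc_irr Hacyc h); rewrite E2h.
Qed.

Variables (T : finType) (g : rel T) (t : V -> label) (f : T -> V).
Hypothesis Hsym : symmetric g.
Hypothesis Hf : injective f.
Hypothesis Hleaf : forall a, is_leaf E (f a).
Hypothesis Hexp : forall a b, a != b ->
  (g a b <-> exists w, is_lca E (f a) (f b) w /\ t w = L1).

Lemma adj_at a b w0 : a != b -> connect E w0 (f a) -> connect E w0 (f b) ->
  (forall e, E w0 e -> connect E e (f a) -> connect E e (f b) -> False) ->
  (g a b <-> t w0 = L1).
Proof.
move=> ab Ha Hb Hno. rewrite Hexp //; split.
- move=> [w [Hw Ht]]. by rewrite -(lcaA Ha Hb Hno Hw).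
- move=> Ht; exists w0; split => //; exact: lca_of.
Qed.

Lemma finish a b c d (k : T -> nat) (W : nat -> nat -> V) :
  uniq [:: a; b; c; d] -> g a b -> g b c -> g c d -> ~~ g a c -> ~~ g b d -> ~~ g a d ->
  (forall p q, p \in [:: a; b; c; d] -> q \in [:: a; b; c; d] -> k p != k q ->
    [/\ connect E (W (k p) (k q)) (f p), connect E (W (k p) (k q)) (f q) &
      forall e, E (W (k p) (k q)) e -> connect E e (f p) -> connect E e (f q) -> False]) ->
  (forall i j, W i j = W j i) ->
  (k a = k b \/ k a = k c \/ k a = k d \/ k b = k c \/ k b = k d \/ k c = k d) ->
  ~ (k a = k b /\ k a = k c /\ k a = k d) -> False.
Proof.
move=> Hu Gab Gbc Gcd Nac Nbd Nad HW HWs Htwo Hnot. apply: Hnot.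
apply: (P4_comb Hsym Gab Gbc Gcd Nac Nbd Nad _ Htwo) => x y z Hx Hy Hz Hyz Hxy.
have Hxz : k x != k z by rewrite -Hyz.
have nexy : x != y by apply/eqP => E0; move: Hxy; by rewrite E0 eqxx.
have nexz : x != z by apply/eqP => E0; move: Hxz; by rewrite E0 eqxx.
have [A1 A2 A3] := HW x y Hx Hy Hxy.
have [B1 B2 B3] := HW x z Hx Hz Hxz.
apply/idP/idP => H.
- apply/(adj_at nexz B1 B2 B3). rewrite -Hyz. exact/(adj_at nexy A1 A2 A3).
- apply/(adj_at nexy A1 A2 A3). rewrite Hyz. exact/(adj_at nexz B1 B2 B3).
Qed.

Lemma noP4 : ~ has_induced_P4 g.
Proof.
move=> [a [b [c [d [Hu [Gab [Gbc [Gcd [Nac [Nbd Nad]]]]]]]]]].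
set P := [:: a; b; c; d].
have Pa : a \in P by rewrite !inE eqxx.
have Pb : b \in P by rewrite !inE eqxx !orbT.
have ab : a != b by apply/eqP => E0; move: Hu; rewrite E0 /= !inE eqxx.
have [rho Hrho] := Hroot.
have [v [Qv _ Vmin]] := min_elem Hacyc (Q := fun w => forall p, p \in P -> connect E w (f p)) (w0 := rho) (fun p _ => Hrho (f p)).
have vnp : forall p, p \in P -> v != f p.
  move=> p Hp; apply/eqP => Ev.
  have Ea : f a = f p by apply: leaf_reach (Hleaf p) _; rewrite -Ev; exact: Qv.
  have Eb : f b = f p by apply: leaf_reach (Hleaf p) _; rewrite -Ev; exact: Qv.
  move: ab; by rewrite (Hf Ea) (Hf Eb) eqxx.
have [ca Eca Ca] := first_step (Qv a Pa) (vnp a Pa).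
pose meet := fun x y => [exists z, connect E x z && connect E y z].
have meetP : forall x y, meet x y -> exists z, connect E x z /\ connect E y z.
  by move=> x y /existsP [z /andP [H1 H2]]; exists z.
have meetI : forall x y z, connect E x z -> connect E y z -> meet x y.
  by move=> x y z H1 H2; apply/existsP; exists z; rewrite H1 H2.
pose memX := fun p => [exists c0, [&& E v c0, connect E c0 (f p) & (c0 == ca) || meet c0 ca]].
have cross : forall p q, memX p -> ~~ memX q -> forall e, E v e -> connect E e (f p) -> connect E e (f q) -> False.
  move=> p q /existsP [c0 /and3P [Ec0 C0p Hc0]] Hq e Ee Ep Eq.
  have Hne : ~ ((e == ca) || meet e ca).
    move=> H; move/negP: Hq; apply; apply/existsP; exists e; by rewrite Ee Eq H.
  case: (eqVneq c0 ca) => [Ec0ca|n0a].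
    apply: Hne; apply/orP; right; apply: (meetI _ _ (f p)) => //; by rewrite -Ec0ca.
  move: Hc0; rewrite (negbTE n0a) /= => Hm. have [y [Y0 Ya]] := meetP _ _ Hm.
  have nea : e != ca by apply/negP => H; apply: Hne; rewrite H.
  have ne0 : e != c0.
    apply/eqP => E0; apply: Hne; apply/orP; right; rewrite E0; exact: meetI Y0 Ya.
  apply: (L3 Ec0 Eca Ee n0a _ _ (ex_intro _ y (conj Y0 Ya)) (ex_intro _ (f p) (conj C0p Ep))).
  - by rewrite eq_sym.
  - by rewrite eq_sym.
have kall : forall (k : T -> nat), k a = k b /\ k a = k c /\ k a = k d -> forall p, p \in P -> k p = k a.
  move=> k [H1 [H2 H3]] p; rewrite !inE => /or4P [] /eqP -> //.
case: (boolP (all memX P)) => HX.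
- case: (boolP (all (fun p => connect E ca (f p)) P)) => HA.
    have Eq := Vmin ca (fun p Hp => (allP HA) p Hp) (connect1 Eca). rewrite Eq in Eca.
    by rewrite (negbTE (acyc_irr Hacyc v)) in Eca.
  have [p0 Hp0 Np0] := allPn HA.
  have := allP HX p0 Hp0; rewrite /memX => /existsP [c2 /and3P [E2 C2p0 Hc2]].
  have c2ca : c2 != ca by apply/eqP => E0; move: Np0; rewrite -E0 C2p0.
  have Hm : meet c2 ca by move: Hc2; rewrite (negbTE c2ca).
  have [y [Y2 Ya]] := meetP _ _ Hm.
  have cover : forall p, p \in P -> connect E ca (f p) || connect E c2 (f p).
    move=> p Hp. have := allP HX p Hp; rewrite /memX => /existsP [c0 /and3P [E0 C0 Hc0]].
    case: (eqVneq c0 ca) => [E0ca|n0a]; first by rewrite -E0ca C0.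
    case: (eqVneq c0 c2) => [E02|n02]; first by rewrite -E02 C0 orbT.
    move: Hc0; rewrite (negbTE n0a) /= => Hm0. have [y' [Y0 Ya']] := meetP _ _ Hm0.
    exfalso. apply: (L3 Eca E2 E0 _ _ _ (ex_intro _ y (conj Ya Y2)) (ex_intro _ y' (conj Ya' Y0))).
    + by rewrite eq_sym.
    + by rewrite eq_sym.
    + by rewrite eq_sym.
  case: (boolP (all (fun p => connect E c2 (f p)) P)) => HB.
    have Eq := Vmin c2 (fun p Hp => (allP HB) p Hp) (connect1 E2). rewrite Eq in E2.
    by rewrite (negbTE (acyc_irr Hacyc v)) in E2.
  have [p1 Hp1 Np1] := allPn HB.
  have [h [Th _]] := top_ex Ya Y2.
  have Cf : cfg v ca c2 h by split; rewrite // eq_sym.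
  have [Tha Th2 Thz] := Th.
  case: (weak_shape Cf) => [Eh|[Eh|[E1h E2h]]].
  + have := cover p1 Hp1; rewrite (negbTE Np1) orbF => H.
    by move: Np1; rewrite (connect_trans Th2) // -Eh.
  + have := cover p0 Hp0; rewrite (negbTE Np0) /= => H.
    by move: Np0; rewrite (connect_trans Tha) // -Eh.
  + pose k := fun p => if connect E ca (f p) && connect E c2 (f p) then 2 else if connect E ca (f p) then 0 else 1.
    pose W := fun i j => if i + j == 1 then v else if i + j == 2 then ca else c2.
    have cls : forall p, p \in P ->
      [\/ [/\ k p = 0, connect E ca (f p) & ~~ connect E c2 (f p)],
          [/\ k p = 1, ~~ connect E ca (f p) & connect E c2 (f p)] |
          [/\ k p = 2, connect E ca (f p) & connect E c2 (f p)]].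
      move=> p Hp; rewrite /k; have := cover p Hp.
      case: (connect E ca (f p)); case: (connect E c2 (f p)) => //= _;
        [by constructor 3 | by constructor 1 | by constructor 2].
    have H01 : forall p q, connect E ca (f p) -> ~~ connect E c2 (f p) ->
        ~~ connect E ca (f q) -> connect E c2 (f q) ->
        forall e, E v e -> connect E e (f p) -> connect E e (f q) -> False.
      move=> p q Ap Bp Aq Bq e Ee Ep Eq.
      have nea : e != ca by apply/eqP => E0; move: Aq; rewrite -E0 Eq.
      have ne2 : e != c2 by apply/eqP => E0; move: Bp; rewrite -E0 Ep.
      apply: (L3 Eca E2 Ee _ _ _ (ex_intro _ y (conj Ya Y2)) (ex_intro _ (f p) (conj Ap Ep))).
      * by rewrite eq_sym.
      * by rewrite eq_sym.
      * by rewrite eq_sym.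
    have Cf' := cfg_sym Cf.
    apply: (finish (k := k) (W := W) Hu Gab Gbc Gcd Nac Nbd Nad).
    * move=> p q Hp Hq Hk.
      case: (cls p Hp) => [[kp Ap Bp]|[kp Ap Bp]|[kp Ap Bp]];
      case: (cls q Hq) => [[kq Aq Bq]|[kq Aq Bq]|[kq Aq Bq]];
      rewrite kp kq /W /=; rewrite kp kq in Hk; try done; split; try exact: Qv;
        try assumption.
      -- exact: H01.
      -- exact: (pair02 Cf E1h E2h).
      -- move=> e Ee Ep Eq; exact: (H01 q p Aq Bq Ap Bp e Ee Eq Ep).
      -- exact: (pair02 Cf' E2h E1h).
      -- move=> e Ee Ep Eq; exact: (pair02 Cf E1h E2h Aq Bq Ap Bp Ee Eq Ep).
      -- move=> e Ee Ep Eq; exact: (pair02 Cf' E2h E1h Bq Aq Bp Ap Ee Eq Ep).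
    * by move=> i j; rewrite /W addnC.
    * have kle : forall p, k p <= 2 by move=> p; rewrite /k; case: ifP => _ //; case: ifP.
      exact: pigeon3 (kle a) (kle b) (kle c) (kle d).
    * move=> Hall.
      have K0 : k p0 = 1.
        case: (cls p0 Hp0) => [[kp Ap Bp]|[kp Ap Bp]|[kp Ap Bp]] //; by rewrite Ap in Np0.
      have K1 : k p1 = 0.
        case: (cls p1 Hp1) => [[kp Ap Bp]|[kp Ap Bp]|[kp Ap Bp]] //; by rewrite Bp in Np1.
      move: (kall k Hall p0 Hp0) (kall k Hall p1 Hp1); rewrite K0 K1; congruence.
- have [p0 Hp0 Np0] := allPn HX.
  have Ma : memX a by apply/existsP; exists ca; rewrite Eca Ca eqxx.
  apply: (finish (k := fun p => nat_of_bool (memX p)) (W := fun _ _ => v) Hu Gab Gbc Gcd Nac Nbd Nad).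
  + move=> p q Hp Hq Hk; split; [exact: Qv | exact: Qv|].
    move=> e Ee Ep Eq. move: Hk.
    case: (boolP (memX p)) => Hmp; case: (boolP (memX q)) => Hmq //= _.
    * exact: (cross p q Hmp Hmq e Ee Ep Eq).
    * exact: (cross q p Hmq Hmp e Ee Eq Ep).
  + by [].
  + have kle : forall p, nat_of_bool (memX p) <= 2 by move=> p; case: (memX p).
    exact: pigeon3 (kle a) (kle b) (kle c) (kle d).
  + move=> Hall. have := kall (fun p => nat_of_bool (memX p)) Hall p0 Hp0.
    by rewrite Ma (negbTE Np0).
Qed.

End Cycles.

Lemma hard_dir (T : finType) (g : rel T) : simple_graph g -> explained_by_weak_level1 g -> cograph g.
Proof.
move=> [Hsym Hirr] [n [E [t [f [[Hacyc Hcase] [Hl1 [Hwk [Ht [Hfinj [Hsurj [Hleaf Hexp]]]]]]]]]]].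
case: Hcase => [[H1 Hno]|[Hroot1 [Hrootdeg Hdeg']]].
- move=> [a [b [c [d [Hu _]]]]]. rewrite card_ord in H1. subst n.
  have Eab : f a = f b by rewrite (ord1 (f a)) (ord1 (f b)).
  move: Hu; by rewrite (Hfinj _ _ Eab) /= !inE eqxx.
- have Hdeg : forall v, indeg E v <= 2.
    move=> v; case: (Hdeg' v) => [->|[[_ ->]|[[-> _]|[-> _]]]] //.
  have Hroot : exists rho, forall v, connect E rho v.
    case: Hroot1 => r [Hr Hruniq]. exists r => v.
    have [z [_ Hzv Hmax]] := max_elem Hacyc (Q := fun _ => True) (y0 := v) I.
    have Hz : indeg E z = 0.
      apply: eq_card0 => u; rewrite !inE. apply/negP => Huz.
      have := Hmax u I (connect1 Huz) => Euz. rewrite Euz in Huz.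
      by rewrite (negbTE (acyc_irr Hacyc z)) in Huz.
    by rewrite (Hruniq z Hz).
  exact: (noP4 Hacyc Hdeg Hl1 Hroot Hwk Hsym Hfinj Hleaf Hexp).
Qed.

Section Seinsche.
Variable T : finType.

Definition splitS (S A B : {set T}) := [/\ A :|: B = S, A :&: B = set0, A != set0 & B != set0].
Definition unif (g : rel T) (A B : {set T}) :=
  (forall x y, x \in A -> y \in B -> g x y) \/ (forall x y, x \in A -> y \in B -> ~~ g x y).

Lemma disjP (A B : {set T}) x : A :&: B = set0 -> x \in A -> x \in B -> False.
Proof. move=> H xA xB. have : x \in A :&: B by rewrite inE xA xB. by rewrite H inE. Qed.

Lemma core1 (g : rel T) (Hs : symmetric g) (nP : ~ has_induced_P4 g) (B1 B2 : {set T}) x y0 n2 :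
  x \notin B1 -> x \notin B2 -> B1 :&: B2 = set0 ->
  (forall u w, u \in B1 -> w \in B2 -> ~~ g u w) ->
  y0 \in B1 -> ~~ g x y0 -> n2 \in B2 -> g x n2 ->
  exists A1 A2, splitS (x |: (B1 :|: B2)) A1 A2 /\ unif g A1 A2.
Proof.
move=> xB1 xB2 Hd Hno y0B1 ny0 n2B2 gxn2.
pose Y := [set y in B1 | ~~ g x y].
case: (classic (exists y n, [/\ y \in Y, n \in B1, g x n & g y n])) => [[y [n [yY nB1 gxn gyn]]]|Hnot].
- exfalso; apply: nP. move: yY; rewrite inE => /andP [yB1 ngxy].
  exists y, n, x, n2.
  have yn : y != n by apply/eqP => E0; move: ngxy; rewrite E0 gxn.
  have yx : y != x by apply/eqP => E0; move: xB1; rewrite -E0 yB1.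
  have yn2 : y != n2 by apply/eqP => E0; apply: (disjP Hd yB1); rewrite E0.
  have nx : n != x by apply/eqP => E0; move: xB1; rewrite -E0 nB1.
  have nn2 : n != n2 by apply/eqP => E0; apply: (disjP Hd nB1); rewrite E0.
  have xn2 : x != n2 by apply/eqP => E0; move: xB2; rewrite E0 n2B2.
  split; first by rewrite /= !inE !negb_or yn yx yn2 nx nn2 xn2.
  split => //; split; first by rewrite Hs.
  split => //; split; first by rewrite Hs.
  split; first exact: Hno.
  exact: Hno.
- exists Y, ((x |: (B1 :|: B2)) :\: Y); split.
  + split.
    * apply/setP => z; rewrite !inE. by case: (z == x); case: (z \in B1); case: (z \in B2); case: (g x z).
    * apply/setP => z; rewrite !inE. by case: (z == x); case: (z \in B1); case: (z \in B2); case: (g x z).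
    * apply/set0Pn; exists y0; by rewrite inE y0B1 ny0.
    * apply/set0Pn; exists x; by rewrite !inE eqxx (negbTE xB1).
  + right => u w; rewrite !inE => /andP [uB1 ngxu] /andP [wY /orP [/eqP ->|wB]].
      by rewrite Hs.
    move/orP: wB => [wB1|wB2]; last exact: Hno.
    move: wY; rewrite wB1 /= negbK => gxw.
    apply/negP => guw; apply: Hnot; exists u, w; split => //; by rewrite inE uB1.
Qed.

Lemma noadj (g : rel T) (Hs : symmetric g) (B1 B2 : {set T}) x :
  x \notin B1 -> x \notin B2 -> B1 :&: B2 = set0 -> B1 != set0 -> B2 != set0 ->
  (forall u w, u \in B1 -> w \in B2 -> ~~ g u w) ->
  (forall w, w \in B2 -> ~~ g x w) ->
  exists A1 A2, splitS (x |: (B1 :|: B2)) A1 A2 /\ unif g A1 A2.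
Proof.
move=> xB1 xB2 Hd n1 n2 Hno Hx. exists B2, (x |: B1); split.
- split.
  + apply/setP => z; rewrite !inE. by case: (z == x); case: (z \in B1); case: (z \in B2).
  + apply/setP => z; rewrite !inE. case: (eqVneq z x) => [->|_] /=; first by rewrite (negbTE xB2).
    case: (boolP (z \in B2)) => // zB2. case: (boolP (z \in B1)) => // zB1.
    exfalso; exact: (disjP Hd zB1 zB2).
  + done.
  + apply/set0Pn; exists x; by rewrite !inE eqxx.
- right => u w uB2; rewrite !inE => /orP [/eqP ->|wB1].
    by rewrite Hs; apply: Hx.
  by rewrite Hs; apply: Hno.
Qed.

Lemma unif_sym (g : rel T) (Hs : symmetric g) A B : unif g A B -> unif g B A.
Proof.
case=> H; [left|right] => x y xB yA; rewrite Hs; exact: H.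
Qed.

Lemma splitS_sym S A B : splitS S A B -> splitS S B A.
Proof. case=> H1 H2 H3 H4; split => //; [by rewrite setUC | by rewrite setIC]. Qed.

Lemma core (g : rel T) (Hs : symmetric g) (nP : ~ has_induced_P4 g) (B1 B2 : {set T}) x :
  x \notin B1 -> x \notin B2 -> B1 :&: B2 = set0 -> B1 != set0 -> B2 != set0 ->
  (forall u w, u \in B1 -> w \in B2 -> ~~ g u w) ->
  exists A1 A2, splitS (x |: (B1 :|: B2)) A1 A2 /\ unif g A1 A2.
Proof.
move=> xB1 xB2 Hd n1 n2 Hno.
have Hno' : forall u w, u \in B2 -> w \in B1 -> ~~ g u w by move=> u w H1 H2; rewrite Hs; exact: Hno.
have Hd' : B2 :&: B1 = set0 by rewrite setIC.
case: (classic (forall y, y \in B1 :|: B2 -> g x y)) => [Hall|Hnall].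
  exists [set x], (B1 :|: B2); split; last by left => u w; rewrite inE => /eqP ->; exact: Hall.
  split.
  - by apply/setP => z; rewrite !inE.
  - apply/setP => z; rewrite !inE. case: (eqVneq z x) => [->|] //=; by rewrite (negbTE xB1) (negbTE xB2).
  - apply/set0Pn; exists x; by rewrite inE.
  - move/set0Pn: n1 => [y Hy]; apply/set0Pn; exists y; by rewrite inE Hy.
have [y0 Hy0 ny0] : exists2 y0, y0 \in B1 :|: B2 & ~~ g x y0.
  apply: NNPP => H; apply: Hnall => y Hy; apply: NNPP => Hg; apply: H; exists y => //; exact/negP.
move: Hy0; rewrite inE => /orP [y0B1|y0B2].
- case: (classic (exists2 n, n \in B2 & g x n)) => [[n nB gxn]|Hnot].
    exact: (core1 Hs nP xB1 xB2 Hd Hno y0B1 ny0 nB gxn).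
  apply: (noadj Hs xB1 xB2 Hd n1 n2 Hno) => w wB2; apply/negP => H; apply: Hnot; by exists w.
- rewrite (setUC B1 B2).
  case: (classic (exists2 n, n \in B1 & g x n)) => [[n nB gxn]|Hnot].
    exact: (core1 Hs nP xB2 xB1 Hd' Hno' y0B2 ny0 nB gxn).
  apply: (noadj Hs xB2 xB1 Hd' n2 n1 Hno') => w wB1; apply/negP => H; apply: Hnot; by exists w.
Qed.

Lemma P4_compl (g : rel T) (Hs : symmetric g) :
  has_induced_P4 (fun u w => ~~ g u w) -> has_induced_P4 g.
Proof.
move=> [a [b [c [d [Hu [Gab [Gbc [Gcd [Nac [Nbd Nad]]]]]]]]]].
move: Hu; rewrite /= !inE !negb_or => /and4P [/and3P [ab ac ad] /andP [bc bd] cd _].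
exists c, a, d, b. move/negPn: Nac => Nac; move/negPn: Nbd => Nbd; move/negPn: Nad => Nad.
split; first by rewrite /= !inE !negb_or eq_sym ac cd eq_sym bc ad ab eq_sym bd.
split; first by rewrite Hs.
split => //; split; first by rewrite Hs.
split => //; split => //. by rewrite Hs.
Qed.

Lemma seinsche (g : rel T) (Hs : symmetric g) (nP : ~ has_induced_P4 g) :
  forall S : {set T}, 2 <= #|S| -> exists A1 A2, splitS S A1 A2 /\ unif g A1 A2.
Proof.
suff H : forall n (S : {set T}), #|S| = n.+2 -> exists A1 A2, splitS S A1 A2 /\ unif g A1 A2.
  move=> S HS. apply: (H (#|S| - 2)). lia.
elim=> [|n IH] S HS.
- have /cards2P [x [y [xy ES]]] : #|S| == 2 by rewrite HS.
  exists [set x], [set y]; split.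
    split.
    + by rewrite ES.
    + apply/setP => z; rewrite !inE. case: (eqVneq z x) => [->|] //=; by rewrite (negbTE xy).
    + apply/set0Pn; exists x; by rewrite inE.
    + apply/set0Pn; exists y; by rewrite inE.
  case: (boolP (g x y)) => H; [left|right] => u w; rewrite !inE => /eqP -> /eqP ->; done.
- have [x xS] : exists x, x \in S by apply/card_gt0P; rewrite HS.
  have HS' : #|S :\ x| = n.+2 by move: HS; rewrite (cardsD1 x S) xS; lia.
  have [B1 [B2 [[HU HI n1 n2] HB]]] := IH _ HS'.
  have ES : S = x |: (B1 :|: B2) by rewrite HU setD1K.
  have xB1' : x \notin B1.
    apply/negP => H; have : x \in S :\ x by rewrite -HU inE H.
    by rewrite !inE eqxx.
  have xB2 : x \notin B2.
    apply/negP => H; have : x \in S :\ x by rewrite -HU inE H orbT.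
    by rewrite !inE eqxx.
  rewrite ES. case: HB => HB.
  + have nP' : ~ has_induced_P4 (fun u w => ~~ g u w) by move=> H; apply: nP; exact: P4_compl.
    have Hs' : symmetric (fun u w => ~~ g u w) by move=> u w; rewrite Hs.
    have [A1 [A2 [Hsp Hun]]] := core Hs' nP' xB1' xB2 HI n1 n2 (fun u w Hu Hw => introT negPn (HB u w Hu Hw)).
    exists A1, A2; split => //. case: Hun => H; [right|left] => u w Hu Hw; move: (H u w Hu Hw) => //.
    by rewrite negbK.
  + exact: (core Hs nP xB1' xB2 HI n1 n2 HB).
Qed.

End Seinsche.

Section Hier.
Variables (T : finType) (g : rel T).
Hypothesis Hs : symmetric g.
Hypothesis nP : ~ has_induced_P4 g.

Definition hier (S : {set T}) (H : {set {set T}}) :=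
  S \in H /\ (forall A, A \in H -> A \subset S) /\ (forall x, x \in S -> [set x] \in H) /\
      (forall A, A \in H -> A != set0) /\
      (forall A B, A \in H -> B \in H -> [\/ A \subset B, B \subset A | A :&: B = set0]) /\
      (forall A, A \in H -> 2 <= #|A| -> exists A1 A2, [/\ A1 \in H, A2 \in H, splitS A A1 A2 & unif g A1 A2]).

Lemma hier_ex : forall S : {set T}, S != set0 -> exists H, hier S H.
Proof.
suff H : forall n (S : {set T}), #|S| <= n -> S != set0 -> exists H, hier S H.
  move=> S; exact: H.
elim=> [|n IH] S HS nS.
  move: HS; rewrite leqn0 cards_eq0 => /eqP E0; by rewrite E0 eqxx in nS.
case: (leqP 2 #|S|) => H2; last first.
  have /cards1P [x Ex] : #|S| == 1.
    rewrite eqn_leq; apply/andP; split; [lia | by rewrite card_gt0].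
  exists [set S]; split; [|split; [|split; [|split; [|split]]]].
  - by rewrite inE.
  - by move=> A; rewrite inE => /eqP ->.
  - move=> y; rewrite Ex inE => /eqP ->; by rewrite inE.
  - by move=> A; rewrite inE => /eqP ->.
  - by move=> A B; rewrite !inE => /eqP -> /eqP ->; constructor 1.
  - by move=> A; rewrite inE => /eqP ->; rewrite leqNgt H2.
have [A1 [A2 [[HU HI n1 n2] Hun]]] := seinsche Hs nP H2.
have sub1 : A1 \subset S by rewrite -HU subsetUl.
have sub2 : A2 \subset S by rewrite -HU subsetUr.
have pr1 : A1 \proper S.
  rewrite properEneq sub1 andbT. apply/eqP => E1. move/set0Pn: n2 => [y yA2].
  have : y \in A1 :&: A2 by rewrite inE yA2 E1 -HU inE yA2 orbT.
  by rewrite HI inE.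
have pr2 : A2 \proper S.
  rewrite properEneq sub2 andbT. apply/eqP => E2. move/set0Pn: n1 => [y yA1].
  have : y \in A1 :&: A2 by rewrite inE yA1 E2 -HU inE yA1.
  by rewrite HI inE.
have [H1 [S1 [sub1' [sing1 [ne1 [lam1 sp1]]]]]] : exists H, hier A1 H.
  apply: IH => //. have := proper_card pr1. lia.
have [H2' [S2 [sub2' [sing2 [ne2 [lam2 sp2]]]]]] : exists H, hier A2 H.
  apply: IH => //. have := proper_card pr2. lia.
have Hin1 : forall A, A \in H1 -> A \subset S := fun A HA => subset_trans (sub1' A HA) sub1.
have Hin2 : forall A, A \in H2' -> A \subset S := fun A HA => subset_trans (sub2' A HA) sub2.
exists (S |: (H1 :|: H2')); split; [|split; [|split; [|split; [|split]]]].
- by rewrite !inE eqxx.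
- move=> A; rewrite !inE => /or3P [/eqP ->|HA|HA]; [exact: subxx | exact: Hin1 | exact: Hin2].
- move=> x; rewrite -HU inE => /orP [xA|xA]; rewrite !inE; [by rewrite sing1 ?orbT | by rewrite sing2 ?orbT].
- move=> A; rewrite !inE => /or3P [/eqP ->|HA|HA]; [exact: nS | exact: ne1 | exact: ne2].
- move=> A B; rewrite !inE => /or3P [/eqP ->|HA|HA] /or3P [/eqP ->|HB|HB].
  + constructor 1; exact: subxx.
  + constructor 2; exact: Hin1.
  + constructor 2; exact: Hin2.
  + constructor 1; exact: Hin1.
  + exact: lam1.
  + constructor 3. apply/setP => z; rewrite !inE. apply/negP => /andP [zA zB].
    have : z \in A1 :&: A2 by rewrite inE (subsetP (sub1' A HA) z zA) (subsetP (sub2' B HB) z zB).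
    by rewrite HI inE.
  + constructor 1; exact: Hin2.
  + constructor 3. apply/setP => z; rewrite !inE. apply/negP => /andP [zA zB].
    have : z \in A1 :&: A2 by rewrite inE (subsetP (sub1' B HB) z zB) (subsetP (sub2' A HA) z zA).
    by rewrite HI inE.
  + exact: lam2.
- move=> A; rewrite !inE => /or3P [/eqP ->|HA|HA] HcA.
  + exists A1, A2; split => //; by rewrite !inE ?S1 ?S2 ?orbT.
  + have [B1 [B2 [HB1 HB2 Hsp Hu]]] := sp1 A HA HcA.
    exists B1, B2; split => //; by rewrite !inE ?HB1 ?HB2 ?orbT.
  + have [B1 [B2 [HB1 HB2 Hsp Hu]]] := sp2 A HA HcA.
    exists B1, B2; split => //; by rewrite !inE ?HB1 ?HB2 ?orbT.
Qed.

End Hier.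

Section Build.
Variables (T : finType) (g : rel T).
Hypothesis Hs : symmetric g.
Variable H : {set {set T}}.
Hypothesis Hh : hier g setT H.

Let HT : setT \in H := proj1 Hh.
Let Hne : forall A, A \in H -> A != set0 := proj1 (proj2 (proj2 (proj2 Hh))).
Let Hsing : forall x, [set x] \in H := fun x => proj1 (proj2 (proj2 Hh)) x (in_setT x).
Let Hlam : forall A B, A \in H -> B \in H -> [\/ A \subset B, B \subset A | A :&: B = set0] :=
  proj1 (proj2 (proj2 (proj2 (proj2 Hh)))).
Let Hsp : forall A, A \in H -> 2 <= #|A| -> exists A1 A2, [/\ A1 \in H, A2 \in H, splitS A A1 A2 & unif g A1 A2] :=
  proj2 (proj2 (proj2 (proj2 (proj2 Hh)))).

Definition ev (i : 'I_#|H|) : {set T} := enum_val i.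
Definition rk (A : {set T}) : 'I_#|H| := enum_rank_in HT A.

Lemma evP i : ev i \in H. Proof. exact: enum_valP. Qed.
Lemma ev_inj : injective ev. Proof. exact: enum_val_inj. Qed.
Lemma rkK A : A \in H -> ev (rk A) = A. Proof. exact: enum_rankK_in. Qed.
Lemma evK i : rk (ev i) = i. Proof. exact: enum_valK_in. Qed.

Definition child (A B : {set T}) :=
  (B \proper A) && [forall C in H, ~~ ((B \proper C) && (C \proper A))].
Definition En (i j : 'I_#|H|) := child (ev i) (ev j).

Lemma disj_in (A B : {set T}) z : A :&: B = set0 -> z \in A -> z \in B -> False.
Proof. move=> HI zA zB. have : z \in A :&: B by rewrite inE zA zB. by rewrite HI inE. Qed.

Lemma sub_part (A A1 A2 C : {set T}) : A \in H -> A1 \in H -> A2 \in H -> splitS A A1 A2 ->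
  C \in H -> C \proper A -> C \subset A1 \/ C \subset A2.
Proof.
move=> HA H1 H2 [HU HI n1 n2] HC Hpr.
have CA : C \subset A by case/andP: Hpr.
have inU : forall z, z \in C -> z \in A1 \/ z \in A2.
  move=> z zC. have : z \in A by exact: (subsetP CA).
  rewrite -HU inE => /orP; tauto.
case: (Hlam HC H1) => [C1|C1|C1]; first by left.
- case: (Hlam HC H2) => [C2|C2|C2].
  + exfalso. move/set0Pn: n1 => [z zA1]. apply: (disj_in HI zA1). exact: (subsetP C2 _ (subsetP C1 _ zA1)).
  + exfalso. move: Hpr; rewrite properE => /andP [_ /negP]; apply.
    rewrite -HU; apply/subsetP => z; rewrite inE => /orP [zz|zz]; [exact: (subsetP C1) | exact: (subsetP C2)].
  + left; apply/subsetP => z zC. case: (inU z zC) => // zA2. exfalso; exact: (disj_in C2 zC zA2).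
- right; apply/subsetP => z zC. case: (inU z zC) => // zA1. exfalso; exact: (disj_in C1 zC zA1).
Qed.

Lemma split_proper (A A1 A2 : {set T}) : splitS A A1 A2 -> A1 \proper A.
Proof.
case=> HU HI n1 n2. rewrite properE -HU subsetUl /=.
move/set0Pn: n2 => [z zA2]. apply/negP => Hs'. have zA1 : z \in A1.
  by apply: (subsetP Hs'); rewrite inE zA2 orbT.
exact: (disj_in HI zA1 zA2).
Qed.

Lemma child_split (A A1 A2 : {set T}) : A \in H -> A1 \in H -> A2 \in H -> splitS A A1 A2 -> child A A1.
Proof.
move=> HA H1 H2 Hsplit. rewrite /child (split_proper Hsplit) /=.
apply/forall_inP => C HC. apply/negP => /andP [P1 P2].
have [HU HI n1 n2] := Hsplit.
case: (sub_part HA H1 H2 Hsplit HC P2) => Hsub.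
- move: P1; rewrite properE Hsub andbF; done.
- move/set0Pn: n1 => [z zA1]. have zC : z \in C by move: P1; rewrite properE => /andP [/subsetP S _]; exact: S.
  exact: (disj_in HI zA1 (subsetP Hsub _ zC)).
Qed.

Lemma child_is (A A1 A2 B : {set T}) : A \in H -> A1 \in H -> A2 \in H -> splitS A A1 A2 -> B \in H ->
  child A B -> B = A1 \/ B = A2.
Proof.
move=> HA H1 H2 Hsplit HB /andP [Pr /forall_inP Hmax].
case: (sub_part HA H1 H2 Hsplit HB Pr) => Hsub; [left|right].
- apply/eqP/negPn/negP => Hne'. have : ~~ ((B \proper A1) && (A1 \proper A)) := Hmax A1 H1.
  by rewrite properEneq Hne' Hsub (split_proper Hsplit).
- apply/eqP/negPn/negP => Hne'. have : ~~ ((B \proper A2) && (A2 \proper A)) := Hmax A2 H2.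
  by rewrite properEneq Hne' Hsub (split_proper (splitS_sym Hsplit)).
Qed.

Lemma En_proper i j : En i j -> ev j \proper ev i.
Proof. by case/andP. Qed.

Lemma conn_sub i j : connect En i j -> ev j \subset ev i.
Proof.
move/connectP => [p Hp ->]. elim: p i Hp => [|k p IH] i /=; first by rewrite subxx.
case/andP => Hik Hp. apply: subset_trans (IH k Hp) _.
by case/andP: (En_proper Hik).
Qed.

Lemma En_acyc : acyclic En.
Proof.
move=> i j Hij. apply/negP => Hji. have := conn_sub Hji.
move: (En_proper Hij); rewrite properE => /andP [_ /negP]; done.
Qed.

Lemma sub_conn i j : ev j \subset ev i -> connect En i j.
Proof.
suff Hm : forall m i, #|ev i| <= m -> ev j \subset ev i -> connect En i j.
  by move=> Hs'; apply: (Hm _ i (leqnn _)).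
elim=> [|m IH] i0 Hm Hsub.
  have := Hne (evP j). move/set0Pn => [z zj]. have : 0 < #|ev i0|.
    by apply/card_gt0P; exists z; exact: (subsetP Hsub).
  lia.
case: (eqVneq (ev j) (ev i0)) => [Eq|Hneq].
  by rewrite (ev_inj Eq) connect0.
have Hpr : ev j \proper ev i0 by rewrite properEneq Hneq Hsub.
have H2 : 2 <= #|ev i0|.
  have := proper_card Hpr. have := Hne (evP j). move/set0Pn => [z zj].
  have : 0 < #|ev j| by apply/card_gt0P; exists z.
  lia.
have [A1 [A2 [H1 H2' Hsplit _]]] := Hsp (evP i0) H2.
have step : forall B1 B2, B1 \in H -> B2 \in H -> splitS (ev i0) B1 B2 -> ev j \subset B1 -> connect En i0 j.
  move=> B1 B2 HB1 HB2 Hspl Hsub1.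
  have Ech : En i0 (rk B1) by rewrite /En (rkK HB1); exact: (child_split (evP i0) HB1 HB2 Hspl).
  apply: connect_trans (connect1 Ech) _. apply: IH; rewrite ?rkK //.
  have := proper_card (split_proper Hspl). lia.
case: (sub_part (evP i0) H1 H2' Hsplit (evP j) Hpr) => Hs1.
- exact: (step A1 A2).
- exact: (step A2 A1 H2' H1 (splitS_sym Hsplit)).
Qed.

Lemma conn_iff i j : connect En i j = (ev j \subset ev i).
Proof. apply/idP/idP; [exact: conn_sub | exact: sub_conn]. Qed.

Lemma indeg_le1 j : indeg En j <= 1.
Proof.
apply/card_le1_eqP => i1 i2; rewrite !inE => H1 H2.
have [P1 /forall_inP M1] := andP H1. have [P2 /forall_inP M2] := andP H2.
apply: ev_inj.
have Hj := Hne (evP j). move/set0Pn: Hj => [z zj].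
have zi1 : z \in ev i1 by move: P1; rewrite properE => /andP [/subsetP S _]; exact: S.
have zi2 : z \in ev i2 by move: P2; rewrite properE => /andP [/subsetP S _]; exact: S.
case: (Hlam (evP i1) (evP i2)) => [S12|S21|D].
- apply/eqP/negPn/negP => Hn. have := M2 _ (evP i1). by rewrite P1 properEneq (eq_sym (ev i1)) Hn S12.
- apply/eqP/negPn/negP => Hn. have := M1 _ (evP i2). by rewrite P2 properEneq Hn S21.
- exfalso; exact: (disj_in D zi1 zi2).
Qed.

Lemma indeg0_iff j : (indeg En j == 0) = (ev j == setT).
Proof.
apply/idP/idP => Hj.
- apply/negPn/negP => Hn.
  have Hc : connect En (rk setT) j by rewrite conn_iff rkK // subsetT.
  have Hne' : rk setT != j by apply/eqP => E0; move: Hn; rewrite -E0 rkK // eqxx.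
  have [k _ Hk] := last_step Hc Hne'.
  move: Hj; rewrite /indeg => /eqP /card0_eq /(_ k). by rewrite !inE Hk.
- apply/eqP/eq_card0 => i; rewrite !inE. apply/negP => /En_proper.
  by rewrite (eqP Hj) properE subsetT andbF.
Qed.

Lemma outdeg0 i : #|ev i| = 1 -> outdeg En i = 0.
Proof.
move=> H1. apply: eq_card0 => j; rewrite !inE. apply/negP => /En_proper /proper_card.
have := Hne (evP j). move/set0Pn => [z zj]. have : 0 < #|ev j| by apply/card_gt0P; exists z.
rewrite H1. lia.
Qed.

Lemma outdeg2 i : 2 <= #|ev i| -> 2 <= outdeg En i.
Proof.
move=> H2. have [A1 [A2 [H1 H2' Hsplit _]]] := Hsp (evP i) H2.
have E1 : En i (rk A1) by rewrite /En rkK //; exact: (child_split (evP i) H1 H2' Hsplit).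
have E2 : En i (rk A2) by rewrite /En rkK //; exact: (child_split (evP i) H2' H1 (splitS_sym Hsplit)).
have n12 : rk A1 != rk A2.
  apply/eqP => Ee. have := congr1 ev Ee. rewrite !rkK // => EA.
  have [HU HI n1 n2] := Hsplit. move/set0Pn: n1 => [z zA1]. apply: (disj_in HI zA1). by rewrite -EA.
have : #|[set rk A1; rk A2]| <= outdeg En i.
  apply: subset_leq_card. apply/subsetP => k; rewrite !inE => /orP [/eqP ->|/eqP ->] //.
by rewrite cards2 n12.
Qed.

Lemma leaf_iff i : is_leaf En i = (#|ev i| == 1).
Proof.
apply/idP/idP => Hi.
- apply/negPn/negP => Hn. have Hge : 2 <= #|ev i|.
    have := Hne (evP i). move/set0Pn => [z zi]. have : 0 < #|ev i| by apply/card_gt0P; exists z.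
    move: Hn. lia.
  have := outdeg2 Hge. move: Hi; rewrite /is_leaf => /eqP ->. done.
- by rewrite /is_leaf outdeg0 // (eqP Hi).
Qed.


Definition sepH (A : {set T}) x y := [forall C in H, (C \proper A) ==> ~~ ((x \in C) && (y \in C))].
Definition tl (i : 'I_#|H|) : label :=
  if #|ev i| == 1 then Lodot
  else if [exists x, exists y, [&& x \in ev i, y \in ev i, sepH (ev i) x y & g x y]] then L1 else L0.
Definition fl (a : T) : 'I_#|H| := rk [set a].

Lemma ev_fl a : ev (fl a) = [set a]. Proof. exact: rkK (Hsing a). Qed.

Lemma conn_fl w a : connect En w (fl a) = (a \in ev w).
Proof. by rewrite conn_iff ev_fl sub1set. Qed.

Lemma sep_cross (A A1 A2 : {set T}) x y : A \in H -> A1 \in H -> A2 \in H -> splitS A A1 A2 ->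
  x \in A -> y \in A -> sepH A x y -> (x \in A1 /\ y \in A2) \/ (x \in A2 /\ y \in A1).
Proof.
move=> HA H1 H2 Hspl xA yA /forall_inP Hsep. have [HU HI n1 n2] := Hspl.
have P1 := split_proper Hspl. have P2 := split_proper (splitS_sym Hspl).
move: xA yA; rewrite -HU !inE => /orP [x1|x2] /orP [y1|y2].
- exfalso. move: (Hsep A1 H1); by rewrite P1 x1 y1.
- by left.
- by right.
- exfalso. move: (Hsep A2 H2); by rewrite P2 x2 y2.
Qed.

Lemma key w a b : a != b -> a \in ev w -> b \in ev w -> sepH (ev w) a b -> (tl w = L1 <-> g a b).
Proof.
move=> ab aw bw Hsep.
have H2 : 2 <= #|ev w|.
  have : #|[set a; b]| <= #|ev w|.
    by apply: subset_leq_card; apply/subsetP => z; rewrite !inE => /orP [/eqP ->|/eqP ->].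
  by rewrite cards2 ab.
have [A1 [A2 [H1 H2' Hspl Hun]]] := Hsp (evP w) H2.
have crossval : forall x y, x \in ev w -> y \in ev w -> sepH (ev w) x y ->
   ((forall u v, u \in A1 -> v \in A2 -> g u v) -> g x y) /\
   ((forall u v, u \in A1 -> v \in A2 -> ~~ g u v) -> ~~ g x y).
  move=> x y xw yw sxy.
  case: (sep_cross (evP w) H1 H2' Hspl xw yw sxy) => [[x1 y2]|[x2 y1]]; split => Hh'.
  - exact: Hh'.
  - exact: Hh'.
  - rewrite Hs; exact: Hh'.
  - rewrite Hs; exact: Hh'.
rewrite /tl (_ : (#|ev w| == 1) = false); last by apply/eqP => E1; rewrite E1 in H2.
case: Hun => [L|R].
- have gab : g a b := (proj1 (crossval a b aw bw Hsep)) L.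
  rewrite (_ : [exists x, exists y, _] = true); first by split.
  apply/existsP; exists a; apply/existsP; exists b; by rewrite aw bw Hsep gab.
- have ngab : ~~ g a b := (proj2 (crossval a b aw bw Hsep)) R.
  rewrite (_ : [exists x, exists y, _] = false).
    split => // H'; by rewrite H' in ngab.
  apply/negbTE/negP => /existsP [x]; move/existsP => [y]; move/and4P => [xw yw sxy gxy].
  by move: ((proj2 (crossval x y xw yw sxy)) R); rewrite gxy.
Qed.

Lemma lca_sep a b w : is_lca En (fl a) (fl b) w -> [/\ a \in ev w, b \in ev w & sepH (ev w) a b].
Proof.
move=> [Ha [Hb Hmin]]. rewrite !conn_fl in Ha Hb. split => //.
apply/forall_inP => C HC. apply/implyP => Hpr. apply/negP => /andP [aC bC].
have Hsub : C \subset ev w by case/andP: Hpr.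
have Ew := Hmin (rk C). rewrite !conn_fl conn_iff !rkK // in Ew.
have EC : rk C = w by apply: Ew.
have : C = ev w by rewrite -EC rkK.
move=> EC'; move: Hpr; by rewrite EC' properE subxx andbF.
Qed.

Lemma lca_ex a b : exists w, is_lca En (fl a) (fl b) w.
Proof.
have Q0 : a \in ev (rk setT) /\ b \in ev (rk setT) by rewrite rkK // !inE.
have [w [[aw bw] _ Wmin]] := min_elem En_acyc (Q := fun w => a \in ev w /\ b \in ev w) Q0.
exists w; split; first by rewrite conn_fl.
split; first by rewrite conn_fl.
move=> w' Ha Hb Hww'. rewrite !conn_fl in Ha Hb. exact: Wmin.
Qed.

Lemma expl a b : a != b -> (g a b <-> exists w, is_lca En (fl a) (fl b) w /\ tl w = L1).
Proof.
move=> ab; split.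
- move=> gab. have [w Hw] := lca_ex a b. exists w; split => //.
  have [aw bw sw] := lca_sep Hw. by apply/(key ab aw bw sw).
- move=> [w [Hw Ht]]. have [aw bw sw] := lca_sep Hw. by apply/(key ab aw bw sw).
Qed.

Lemma no_cycle S : is_cycle En S -> False.
Proof.
move=> [[[Hconn Hdel] _] H3].
have [u0 u0S] : exists u, u \in S by apply/card_gt0P; lia.
case: (@arg_minnP _ u0 (fun i => i \in S) (fun i => #|ev i|) u0S) => u uS Umin.
have nbr : forall w, und_in En S u w -> En w u.
  move=> w /and3P [_ wS /orP [Euw|Ewu]] //. exfalso.
  have := proper_card (En_proper Euw). have := Umin w wS. lia.
have par : forall w w', En w u -> En w' u -> w = w'.
  move=> w w' Hw Hw'. have /card_le1_eqP Hc := indeg_le1 u.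
  by rewrite (Hc w w') ?inE.
have iso : forall (A : {set 'I_#|H|}) y, (forall w, ~~ und_in En A u w) ->
    connect (und_in En A) u y -> y = u.
  move=> A y Hno /connectP [[|w p] /= Hp ->] //. by move: Hp; rewrite (negbTE (Hno w)).
case: (classic (exists p, und_in En S u p)) => [[p Hp]|Hnp].
- have Epu := nbr p Hp.
  have up : u != p by rewrite eq_sym (edge_neq En_acyc Epu).
  have pS : p \in S by case/and3P: Hp.
  have [y [yS yu yp]] : exists y, [/\ y \in S, y != u & y != p].
    have : 0 < #|(S :\ u) :\ p|.
      have := cardsD1 u S; have := cardsD1 p (S :\ u); rewrite uS !inE pS (eq_sym p) up /= => h1 h2. move: H3; rewrite h2 h1. lia.
    move/card_gt0P => [y]; rewrite !inE => /and3P [y1 y2 y3]. by exists y.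
  have Hc : connect (und_in En (S :\ p)) u y.
    apply: (Hdel p pS); by rewrite !inE ?up ?yp ?uS ?yS.
  have Hno : forall w, ~~ und_in En (S :\ p) u w.
    move=> w; apply/negP => /and3P [_ wSp Huw]. move: wSp; rewrite !inE => /andP [wp wS].
    have Ewu : En w u by apply: nbr; rewrite /und_in uS wS Huw.
    by move: wp; rewrite (par w p Ewu Epu) eqxx.
  by move: yu; rewrite (iso _ _ Hno Hc) eqxx.
- have [y [yS yu]] : exists y, y \in S /\ y != u.
    have : 0 < #|S :\ u| by have := cardsD1 u S; rewrite uS => h1; move: H3; rewrite h1; lia.
    move/card_gt0P => [y]; rewrite !inE => /andP [y1 y2]. by exists y.
  have Hc := Hconn u y uS yS.
  have Hno : forall w, ~~ und_in En S u w by move=> w; apply/negP => Hw; apply: Hnp; exists w.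
  by move: yu; rewrite (iso _ _ Hno Hc) eqxx.
Qed.

End Build.

Lemma easy_dir (T : finType) (g : rel T) : 0 < #|T| -> simple_graph g -> cograph g ->
  explained_by_weak_level1 g.
Proof.
move=> HT [Hs Hirr] nP.
have nT : [set: T] != set0.
  apply/set0Pn; move/card_gt0P: HT => [x _]; exists x; by rewrite inE.
have [H Hh] := hier_ex Hs nP nT.
have [HTin [_ [Hsing [Hne [Hlam Hsp]]]]] := Hh.
exists #|H|, (@En T H), (tl g (H:=H)), (fl Hh).
split; [|split; [|split; [|split; [|split; [|split; [|split]]]]]].
- split; first exact: En_acyc.
  case: (leqP #|T| 1) => HT1.
  + have HH : forall A, A \in H -> A = setT.
      move=> A HA. move/set0Pn: (Hne A HA) => [y yA]. apply/setP => z; rewrite inE.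
      move/card_le1_eqP: HT1 => Heq. by rewrite (Heq y z).
    left; split.
    * rewrite card_ord. rewrite (_ : H = [set setT]) ?cards1 //.
      apply/setP => A; rewrite inE. apply/idP/idP => [HA|/eqP ->] //.
      by rewrite (HH A HA).
    * move=> u v; apply/negP => /En_proper. by rewrite (HH _ (evP u)) (HH _ (evP v)) properE subxx andbF.
  + right. split; [|split].
    * exists (rk Hh setT). split; first by apply/eqP; rewrite (indeg0_iff Hh) (rkK Hh).
      move=> x /eqP; rewrite (indeg0_iff Hh) => /eqP Ex. by rewrite -Ex (evK Hh).
    * move=> r /eqP; rewrite (indeg0_iff Hh) => /eqP Er. apply: (outdeg2 Hh). rewrite Er cardsT. lia.
    * move=> v. case: (eqVneq (ev v) setT) => Ev.
        left; apply/eqP; by rewrite (indeg0_iff Hh) Ev.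
      have I1 : indeg (@En T H) v = 1.
        apply/eqP; rewrite eqn_leq (indeg_le1 Hh v) /= lt0n. by rewrite (indeg0_iff Hh).
      case: (eqVneq #|ev v| 1) => Hc.
        right; left; split => //; exact: (outdeg0 Hh).
      right; right; left; split => //. apply: (outdeg2 Hh).
      move/set0Pn: (Hne _ (evP v)) => [y yv]. have : 0 < #|ev v| by apply/card_gt0P; exists y.
      move: Hc; lia.
- move=> S _. rewrite (_ : [set v in S | is_hybrid (@En T H) v] = set0) ?cards0 //.
  apply/setP => v; rewrite !inE /is_hybrid. have := indeg_le1 Hh v.
  case: (indeg (@En T H) v) => [|[|m]] //; by rewrite andbF.
- move=> S HS; exfalso; exact: (no_cycle Hh HS).
- move=> v; rewrite (leaf_iff Hh) /tl. case: (#|ev v| == 1) => //.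
  split => //; by case: ifP.
- move=> a b Eab. apply/set1_inj. by rewrite -(ev_fl Hh a) -(ev_fl Hh b) Eab.
- move=> v; rewrite (leaf_iff Hh) => /cards1P [a Ea]; exists a.
  apply: ev_inj; by rewrite (ev_fl Hh) Ea.
- move=> a; by rewrite (leaf_iff Hh) (ev_fl Hh) cards1.
- move=> a b ab; exact: (expl Hs Hh ab).
Qed.

Theorem mainTheorem4 (T : finType) (g : rel T) :
  0 < #|T| -> simple_graph g ->
  (cograph g <-> explained_by_weak_level1 g).
Proof.
move=> HT Hsg; split.
- exact: easy_dir.
- exact: hard_dir.
Qed.
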